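(* Let $\gamma=(x,y)$ be a smooth nondegenerate curve in the equi-affine plane, parametrised by equi-affine arc-length $s$, with equi-affine curvature $\kappa$. Then $\gamma$ is a critical point of the total equi-affine curvature $\int\kappa\,\mathrm{d}s$ (with respect to compactly supported variations) if and only if there exist constants $A,B\in\mathbb{R}$ with $\kappa=A\,x'+B\,y'$; i.e., the centro-affine curvature of the tangent image $T=\gamma'$ is a linear function of its position vector.
   Context: The equi-affine plane is $\mathbb{R}^2$ with the area form $|u,v|=\det(u,v)$. A curve $\gamma$ is parametrised by equi-affine arc-length $s$ if $|\gamma',\gamma''|=1$ everywhere; primes denote derivatives with respect to $s$. The equi-affine tangent is $T=\gamma'$, the Blaschke normal is $N=\gamma''$, and the equi-affine curvature $\kappa$ is defined by $\gamma'''=-\kappa\,\gamma'$. The centro-affine curvature of the curve $s\mapsto T(s)$ is $\kappa$ itself in the sense that $T''=-\kappa T$. A curve is a critical point of a functional if the first variation of the functional vanishes for every smooth compactly supported variation (for closed curves, every smooth variation), the functional being computed for each varied curve with its own equi-affine arc-length and curvature. *)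

(* Defs.v *)
From Stdlib Require Import Reals.
From Coquelicot Require Import Coquelicot.
Open Scope R_scope.

Definition inI (lo hi : Rbar) (t : R) : Prop :=
  Rbar_lt lo (Finite t) /\ Rbar_lt (Finite t) hi.

Definition det2 (u1 u2 v1 v2 : R) : R := u1 * v2 - u2 * v1.

Definition smooth_on (lo hi : Rbar) (f : R -> R) : Prop :=
  forall (n : nat) (t : R), inI lo hi t -> ex_derive_n f n t.

(* C^k on the strip R x I of a function f u t (u = variation parameter,
   t = curve parameter): all mixed partial derivatives of order <= k
   exist and are jointly continuous. *)
Fixpoint C2k (k : nat) (lo hi : Rbar) (f : R -> R -> R) : Prop :=
  match k with
  | O => forall u t, inI lo hi t ->
           continuous (fun p : R * R => f (fst p) (snd p)) (u, t)
  | S k' =>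
      (forall u t, inI lo hi t ->
         ex_derive (fun s => f u s) t /\ ex_derive (fun v => f v t) u)
      /\ C2k k' lo hi (fun u t => Derive (fun s => f u s) t)
      /\ C2k k' lo hi (fun u t => Derive (fun v => f v t) u)
      /\ C2k k' lo hi f
  end.

Definition smooth2_on (lo hi : Rbar) (f : R -> R -> R) : Prop :=
  forall k, C2k k lo hi f.

(* Equi-affine quantities of a plane curve c = (x, y) in an arbitrary
   (nondegenerate, |c',c''| > 0) parametrisation t; d/ds = (1/phi) d/dt. *)
Definition ea_det (x y : R -> R) (t : R) : R :=
  det2 (Derive x t) (Derive y t) (Derive_n x 2 t) (Derive_n y 2 t).

(* ds/dt = |c',c''|^(1/3) *)
Definition ea_phi (x y : R -> R) (t : R) : R := Rpower (ea_det x y t) (1/3).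

Definition ea_Tx (x y : R -> R) (t : R) : R := Derive x t / ea_phi x y t.
Definition ea_Ty (x y : R -> R) (t : R) : R := Derive y t / ea_phi x y t.

Definition ea_Nx (x y : R -> R) (t : R) : R :=
  Derive (ea_Tx x y) t / ea_phi x y t.
Definition ea_Ny (x y : R -> R) (t : R) : R :=
  Derive (ea_Ty x y) t / ea_phi x y t.

(* equi-affine curvature: dN/ds = -kappa T with |T,N| = 1,
   i.e. kappa = |N, dN/ds|. *)
Definition ea_curv (x y : R -> R) (t : R) : R :=
  det2 (ea_Nx x y t) (ea_Ny x y t)
       (Derive (ea_Nx x y) t / ea_phi x y t)
       (Derive (ea_Ny x y) t / ea_phi x y t).

Definition total_ea_curv (x y : R -> R) (a b : R) : R :=
  RInt (fun t => ea_curv x y t * ea_phi x y t) a b.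

Definition ea_critical (lo hi : Rbar) (x y : R -> R) : Prop :=
  forall (X Y : R -> R -> R) (a b : R),
    smooth2_on lo hi X -> smooth2_on lo hi Y ->
    (forall t, inI lo hi t -> X 0 t = x t /\ Y 0 t = y t) ->
    inI lo hi a -> inI lo hi b -> a <= b ->
    (forall u t, inI lo hi t -> (t < a \/ b < t) -> X u t = x t /\ Y u t = y t) ->
    is_derive (fun u => total_ea_curv (X u) (Y u) a b) 0 0.

(* Main.v *)
Require Import Defs.
From Stdlib Require Import Reals Lra Lia Psatz ClassicalEpsilon Classical List.
From Coquelicot Require Import Coquelicot.
Open Scope R_scope.

Lemma lo_open (lo : Rbar) (t : R) : Rbar_lt lo t -> exists e : posreal, forall s, Rabs (s - t) < e -> Rbar_lt lo s.
Proof.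
  destruct lo as [l| |]; simpl; intros H.
  - assert (He : 0 < t - l) by lra. exists (mkposreal _ He). simpl. intros s Hs.
    apply Rabs_lt_between in Hs. lra.
  - destruct H.
  - exists (mkposreal 1 Rlt_0_1). intros; exact I.
Qed.

Lemma hi_open (hi : Rbar) (t : R) : Rbar_lt t hi -> exists e : posreal, forall s, Rabs (s - t) < e -> Rbar_lt s hi.
Proof.
  destruct hi as [l| |]; simpl; intros H.
  - assert (He : 0 < l - t) by lra. exists (mkposreal _ He). simpl. intros s Hs.
    apply Rabs_lt_between in Hs. lra.
  - exists (mkposreal 1 Rlt_0_1). intros; exact I.
  - destruct H.
Qed.

Lemma inI_open lo hi t : inI lo hi t -> exists e : posreal, forall s, Rabs (s - t) < e -> inI lo hi s.
Proof.
  intros [H1 H2]. destruct (lo_open _ _ H1) as [e1 He1]. destruct (hi_open _ _ H2) as [e2 He2].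
  assert (He : 0 < Rmin e1 e2) by (apply Rmin_pos; apply cond_pos).
  exists (mkposreal _ He). simpl. intros s Hs. split.
  - apply He1. eapply Rlt_le_trans; [exact Hs| apply Rmin_l].
  - apply He2. eapply Rlt_le_trans; [exact Hs| apply Rmin_r].
Qed.

Lemma inI_locally lo hi t : inI lo hi t -> locally t (inI lo hi).
Proof. intros H. destruct (inI_open _ _ _ H) as [e He]. exists e. intros s Hs. apply He. exact Hs. Qed.

Definition Sm lo hi f := smooth2_on lo hi f.
Definition dt (f : R -> R -> R) := fun u t => Derive (fun s => f u s) t.
Definition du (f : R -> R -> R) := fun u t => Derive (fun v => f v t) u.

Lemma Sm_dt lo hi f : Sm lo hi f -> Sm lo hi (dt f).
Proof. intros H k. exact (proj1 (proj2 (H (S k)))). Qed.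
Lemma Sm_du lo hi f : Sm lo hi f -> Sm lo hi (du f).
Proof. intros H k. exact (proj1 (proj2 (proj2 (H (S k))))). Qed.
Lemma Sm_cont lo hi f u t : Sm lo hi f -> inI lo hi t -> continuity_2d_pt f u t.
Proof. intros H Ht. apply continuity_2d_pt_filterlim. exact (H O u t Ht). Qed.
Lemma Sm_ext lo hi f u t : Sm lo hi f -> inI lo hi t ->
  ex_derive (fun s => f u s) t /\ ex_derive (fun v => f v t) u.
Proof. intros H Ht. exact (proj1 (H 1%nat) u t Ht). Qed.

Lemma Sm_schwarz lo hi f u t : Sm lo hi f -> inI lo hi t ->
  Derive (fun z => Derive (fun s => f z s) t) u = Derive (fun s => Derive (fun z => f z s) u) t.
Proof.
  intros H Ht. destruct (inI_open _ _ _ Ht) as [e He].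
  apply Schwarz.
  - exists e. intros u' v _ Hv. specialize (He v Hv).
    destruct (Sm_ext _ _ f u' v H He) as [A B].
    destruct (Sm_ext _ _ (dt f) u' v (Sm_dt _ _ _ H) He) as [_ C].
    destruct (Sm_ext _ _ (du f) u' v (Sm_du _ _ _ H) He) as [D _].
    unfold dt, du in *. tauto.
  - exact (Sm_cont _ _ (du (dt f)) u t (Sm_du _ _ _ (Sm_dt _ _ _ H)) Ht).
  - exact (Sm_cont _ _ (dt (du f)) u t (Sm_dt _ _ _ (Sm_du _ _ _ H)) Ht).
Qed.

Definition Xj (X : R -> R -> R) (j : nat) := fun u t => Derive_n (X u) j t.

Lemma Sm_Xj lo hi X j : Sm lo hi X -> Sm lo hi (Xj X j).
Proof.
  intros H. induction j.
  - exact H.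
  - exact (Sm_dt _ _ _ IHj).
Qed.

Definition icb (y : R) := / Rpower y (1/3).

Lemma icb_eq y : 0 < y -> icb y = exp (-(1/3) * ln y).
Proof. intros H. unfold icb, Rpower. rewrite <- exp_Ropp. f_equal. ring. Qed.

Lemma icb_cube y : 0 < y -> icb y ^ 3 = / y.
Proof.
  intros H. rewrite icb_eq by exact H. simpl. rewrite Rmult_1_r.
  rewrite <- !exp_plus. replace (-(1/3) * ln y + (-(1/3) * ln y + -(1/3) * ln y)) with (- ln y) by field.
  rewrite exp_Ropp, exp_ln by exact H. reflexivity.
Qed.

Lemma icb_pos y : 0 < y -> 0 < icb y.
Proof. intros H. rewrite icb_eq by exact H. apply exp_pos. Qed.

Lemma icb_1 : icb 1 = 1.
Proof. rewrite icb_eq by lra. rewrite ln_1. replace (-(1/3)*0) with 0 by ring. apply exp_0. Qed.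

Lemma icb_deriv y : 0 < y -> is_derive icb y (-(1/3) * icb y ^ 4).
Proof.
  intros H.
  apply is_derive_ext_loc with (fun y => exp (-(1/3) * ln y)).
  - assert (Hp : 0 < y) by exact H. exists (mkposreal y Hp). intros z Hz.
    simpl in Hz. unfold ball in Hz; simpl in Hz; unfold AbsRing_ball, abs, minus, plus, opp in Hz; simpl in Hz.
    apply Rabs_lt_between in Hz. symmetry. apply icb_eq. lra.
  - auto_derive. lra.
    replace (icb y ^ 4) with (icb y * icb y ^ 3) by ring.
    rewrite icb_cube by exact H. rewrite icb_eq by exact H. field. lra.
Qed.

Lemma icb_cont y : 0 < y -> continuous icb y.
Proof. intros H. apply (@ex_derive_continuous R_AbsRing R_NormedModule icb y). eexists. apply icb_deriv. exact H. Qed.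

Definition PD1 x1 x3 y1 y3 := x1*y3 - y1*x3.
Definition PD2 x1 x2 x3 x4 y1 y2 y3 y4 := x1*y4 + x2*y3 - y1*x4 - y2*x3.
Definition PP1 d1 q := d1*q^2/3.
Definition PP2 d1 d2 q := d2*q^2/3 - 2*d1^2*q^5/9.
Definition PN x1 x2 p1 q := x2*q^2 - x1*p1*q^3.
Definition PNp x1 x2 x3 p1 p2 q := x3*q^2 - 3*x2*p1*q^3 - x1*p2*q^3 + 3*x1*p1^2*q^4.
Definition Poly x1 x2 x3 x4 y1 y2 y3 y4 q :=
  PN x1 x2 (PP1 (PD1 x1 x3 y1 y3) q) q *
  PNp y1 y2 y3 (PP1 (PD1 x1 x3 y1 y3) q) (PP2 (PD1 x1 x3 y1 y3) (PD2 x1 x2 x3 x4 y1 y2 y3 y4) q) q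
  - PN y1 y2 (PP1 (PD1 x1 x3 y1 y3) q) q *
  PNp x1 x2 x3 (PP1 (PD1 x1 x3 y1 y3) q) (PP2 (PD1 x1 x3 y1 y3) (PD2 x1 x2 x3 x4 y1 y2 y3 y4) q) q.

Lemma curve_abstract (x1 x2 x3 y1 y2 y3 q : R -> R) (x4 y4 t : R) :
  locally t (fun s => is_derive x1 s (x2 s) /\ is_derive y1 s (y2 s) /\
     is_derive x2 s (x3 s) /\ is_derive y2 s (y3 s) /\
     is_derive q s (-(1/3) * q s^4 * (x1 s * y3 s - y1 s * x3 s)) /\ q s <> 0) ->
  is_derive x3 t x4 -> is_derive y3 t y4 ->
  (Derive (fun r => x1 r * q r) t * q t) * Derive (fun s => Derive (fun r => y1 r * q r) s * q s) t
  - (Derive (fun r => y1 r * q r) t * q t) * Derive (fun s => Derive (fun r => x1 r * q r) s * q s) t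
  = Poly (x1 t) (x2 t) (x3 t) x4 (y1 t) (y2 t) (y3 t) y4 (q t).
Proof.
  intros Hl Hx4 Hy4.
  assert (HTx : locally t (fun s => Derive (fun r => x1 r * q r) s * q s =
     (x2 s * q s + x1 s * (-(1/3) * q s^4 * (x1 s * y3 s - y1 s * x3 s))) * q s)).
  { eapply filter_imp; [| exact Hl]. intros s (A & B & C & D & E & F).
    f_equal. apply is_derive_unique. apply (is_derive_mult x1 q); auto. intros; simpl; apply Rmult_comm. }
  assert (HTy : locally t (fun s => Derive (fun r => y1 r * q r) s * q s =
     (y2 s * q s + y1 s * (-(1/3) * q s^4 * (x1 s * y3 s - y1 s * x3 s))) * q s)).
  { eapply filter_imp; [| exact Hl]. intros s (A & B & C & D & E & F).
    f_equal. apply is_derive_unique. apply (is_derive_mult y1 q); auto. intros; simpl; apply Rmult_comm. }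
  assert (Rx : Derive (fun s => Derive (fun r => x1 r * q r) s * q s) t =
     Derive (fun s => (x2 s * q s + x1 s * (-(1/3) * q s^4 * (x1 s * y3 s - y1 s * x3 s))) * q s) t)
    by (apply Derive_ext_loc; exact HTx).
  assert (Ry : Derive (fun s => Derive (fun r => y1 r * q r) s * q s) t =
     Derive (fun s => (y2 s * q s + y1 s * (-(1/3) * q s^4 * (x1 s * y3 s - y1 s * x3 s))) * q s) t)
    by (apply Derive_ext_loc; exact HTy).
  rewrite Rx, Ry.
  destruct (locally_singleton _ _ Hl) as (A & B & C & D & E & F).
  pose proof (locally_singleton _ _ HTx) as Ex. pose proof (locally_singleton _ _ HTy) as Ey.
  simpl in Ex, Ey. rewrite Ex, Ey.
  assert (E1 : Derive (fun x => x1 x) t = x2 t) by (apply is_derive_unique; exact A).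
  assert (E2 : Derive (fun x => y1 x) t = y2 t) by (apply is_derive_unique; exact B).
  assert (E3 : Derive (fun x => x2 x) t = x3 t) by (apply is_derive_unique; exact C).
  assert (E4 : Derive (fun x => y2 x) t = y3 t) by (apply is_derive_unique; exact D).
  assert (E5 : Derive (fun x => q x) t = -(1/3) * q t^4 * (x1 t * y3 t - y1 t * x3 t)) by (apply is_derive_unique; exact E).
  assert (E6 : Derive (fun x => x3 x) t = x4) by (apply is_derive_unique; exact Hx4).
  assert (E7 : Derive (fun x => y3 x) t = y4) by (apply is_derive_unique; exact Hy4).
  assert (X1 : ex_derive x1 t) by (eexists; exact A).
  assert (Y1 : ex_derive y1 t) by (eexists; exact B).
  assert (X2 : ex_derive x2 t) by (eexists; exact C).
  assert (Y2 : ex_derive y2 t) by (eexists; exact D).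
  assert (Q1 : ex_derive q t) by (eexists; exact E).
  assert (X3 : ex_derive x3 t) by (eexists; exact Hx4).
  assert (Y3 : ex_derive y3 t) by (eexists; exact Hy4).
  eassert (HDx : is_derive (fun s : R => (x2 s * q s + x1 s * (-(1/3) * q s^4 * (x1 s * y3 s - y1 s * x3 s))) * q s) t _).
  { auto_derive. tauto. reflexivity. }
  eassert (HDy : is_derive (fun s : R => (y2 s * q s + y1 s * (-(1/3) * q s^4 * (x1 s * y3 s - y1 s * x3 s))) * q s) t _).
  { auto_derive. tauto. reflexivity. }
  rewrite (is_derive_unique _ _ _ HDx), (is_derive_unique _ _ _ HDy).
  rewrite E1, E2, E3, E4, E5, E6, E7.
  unfold Poly, PN, PNp, PP1, PP2, PD1, PD2. field.
Qed.

Lemma der_n (f : R -> R) n s : ex_derive (Derive_n f n) s -> is_derive (Derive_n f n) s (Derive_n f (S n) s).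
Proof. intros H. exact (Derive_correct _ _ H). Qed.

Lemma det_der (f1 f2 g1 g2 : R -> R) s a b : is_derive f1 s (f2 s) -> is_derive g1 s (g2 s) ->
  is_derive f2 s a -> is_derive g2 s b ->
  is_derive (fun r => f1 r * g2 r - g1 r * f2 r) s (f1 s * b - g1 s * a).
Proof.
  intros A B C D.
  assert (E1 : Derive (fun x => f1 x) s = f2 s) by (apply is_derive_unique; exact A).
  assert (E2 : Derive (fun x => g1 x) s = g2 s) by (apply is_derive_unique; exact B).
  assert (E3 : Derive (fun x => f2 x) s = a) by (apply is_derive_unique; exact C).
  assert (E4 : Derive (fun x => g2 x) s = b) by (apply is_derive_unique; exact D).
  auto_derive.
  - repeat split; eexists; eassumption.
  - rewrite E1, E2, E3, E4. ring.
Qed.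

Lemma ea_det_deriv cx cy s : (forall n, ex_derive (Derive_n cx n) s /\ ex_derive (Derive_n cy n) s) ->
  is_derive (ea_det cx cy) s (Derive_n cx 1 s * Derive_n cy 3 s - Derive_n cy 1 s * Derive_n cx 3 s).
Proof.
  intros H. destruct (H 1%nat) as [A1 B1]. destruct (H 2%nat) as [A2 B2].
  exact (det_der (Derive_n cx 1) (Derive_n cx 2) (Derive_n cy 1) (Derive_n cy 2) s _ _
    (der_n _ _ _ A1) (der_n _ _ _ B1) (der_n _ _ _ A2) (der_n _ _ _ B2)).
Qed.

Lemma icb_comp_deriv (D : R -> R) s d : 0 < D s -> is_derive D s d ->
  is_derive (fun r => icb (D r)) s (-(1/3) * icb (D s)^4 * d).
Proof.
  intros Hp HD. eapply is_derive_ext. { intros r; reflexivity. }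
  pose proof (is_derive_comp icb D s _ _ (icb_deriv _ Hp) HD) as K.
  replace (-(1/3) * icb (D s)^4 * d) with (scal d (-(1/3) * icb (D s)^4)) by (unfold scal; simpl; unfold mult; simpl; ring).
  exact K.
Qed.

Lemma curve_formula cx cy t :
  locally t (fun s => 0 < ea_det cx cy s /\ forall n, ex_derive (Derive_n cx n) s /\ ex_derive (Derive_n cy n) s) ->
  ea_curv cx cy t * ea_phi cx cy t =
  Poly (Derive_n cx 1 t) (Derive_n cx 2 t) (Derive_n cx 3 t) (Derive_n cx 4 t)
       (Derive_n cy 1 t) (Derive_n cy 2 t) (Derive_n cy 3 t) (Derive_n cy 4 t) (icb (ea_det cx cy t)).
Proof.
  intros Hl.
  destruct (locally_singleton _ _ Hl) as [Hp Hd].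
  assert (Hphi : ea_phi cx cy t <> 0).
  { unfold ea_phi, Rpower. apply Rgt_not_eq, exp_pos. }
  transitivity (ea_Nx cx cy t * Derive (ea_Ny cx cy) t - ea_Ny cx cy t * Derive (ea_Nx cx cy) t).
  { unfold ea_curv, det2. field. exact Hphi. }
  refine (curve_abstract (Derive_n cx 1) (Derive_n cx 2) (Derive_n cx 3)
     (Derive_n cy 1) (Derive_n cy 2) (Derive_n cy 3) (fun s => icb (ea_det cx cy s)) _ _ t _ _ _).
  - eapply filter_imp; [| exact Hl]. intros s [Hs Hn].
    destruct (Hn 1%nat) as [A1 B1]. destruct (Hn 2%nat) as [A2 B2].
    refine (conj (der_n _ _ _ A1) (conj (der_n _ _ _ B1) (conj (der_n _ _ _ A2) (conj (der_n _ _ _ B2) (conj _ _))))).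
    + apply icb_comp_deriv; [exact Hs | apply ea_det_deriv; exact Hn].
    + apply Rgt_not_eq, icb_pos, Hs.
  - destruct (Hd 3%nat) as [A _]. exact (der_n _ _ _ A).
  - destruct (Hd 3%nat) as [_ A]. exact (der_n _ _ _ A).
Qed.

Definition Kc (Om : R -> R -> Prop) (f : R -> R -> R) : Prop :=
  forall u t, Om u t -> continuity_2d_pt f u t /\ ex_derive (fun z => f z t) u /\ continuity_2d_pt (du f) u t.

Definition Open2 (Om : R -> R -> Prop) := forall u t, Om u t -> locally_2d Om u t.

Lemma cont_pow g u t n : continuity_2d_pt g u t -> continuity_2d_pt (fun u t => g u t ^ n) u t.
Proof.
  intros H. induction n.
  - eapply continuity_2d_pt_ext; [| apply (continuity_2d_pt_const u t 1)]. intros; simpl; reflexivity.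
  - apply (continuity_2d_pt_mult g (fun u t => g u t ^ n)); auto.
Qed.

Section K.
Variable Om : R -> R -> Prop.
Hypothesis HO : Open2 Om.

Lemma loc_Om u t (P : R -> R -> Prop) : Om u t -> (forall u' t', Om u' t' -> P u' t') -> locally_2d P u t.
Proof. intros H HP. destruct (HO u t H) as [d Hd]. exists d. intros; apply HP, Hd; auto. Qed.

Lemma K_const c : Kc Om (fun _ _ => c).
Proof.
  intros u t H. split; [apply continuity_2d_pt_const|]. split.
  - apply ex_derive_const.
  - unfold du. eapply continuity_2d_pt_ext; [| apply (continuity_2d_pt_const u t 0)].
    intros; simpl. symmetry. apply Derive_const.
Qed.

Lemma K_plus f g : Kc Om f -> Kc Om g -> Kc Om (fun u t => f u t + g u t).
Proof.
  intros Hf Hg u t H. destruct (Hf u t H) as (A1 & B1 & C1). destruct (Hg u t H) as (A2 & B2 & C2).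
  split; [apply continuity_2d_pt_plus; auto|]. split.
  - auto_derive; auto.
  - apply continuity_2d_pt_ext_loc with (fun u t => du f u t + du g u t).
    + apply loc_Om; auto. intros u' t' H'. destruct (Hf u' t' H') as (_ & B1' & _). destruct (Hg u' t' H') as (_ & B2' & _).
      unfold du. symmetry. apply (Derive_plus (fun z => f z t') (fun z => g z t')); auto.
    + apply continuity_2d_pt_plus; auto.
Qed.

Lemma K_opp f : Kc Om f -> Kc Om (fun u t => - f u t).
Proof.
  intros Hf u t H. destruct (Hf u t H) as (A1 & B1 & C1).
  split; [apply continuity_2d_pt_opp; auto|]. split.
  - auto_derive; auto.
  - apply continuity_2d_pt_ext_loc with (fun u t => - du f u t).
    + apply loc_Om; auto. intros u' t' H'.
      unfold du. symmetry. apply (Derive_opp (fun z => f z t')).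
    + apply continuity_2d_pt_opp; auto.
Qed.

Lemma K_minus f g : Kc Om f -> Kc Om g -> Kc Om (fun u t => f u t - g u t).
Proof. intros Hf Hg. apply (K_plus f (fun u t => - g u t)); auto. apply K_opp; auto. Qed.

Lemma K_mult f g : Kc Om f -> Kc Om g -> Kc Om (fun u t => f u t * g u t).
Proof.
  intros Hf Hg u t H. destruct (Hf u t H) as (A1 & B1 & C1). destruct (Hg u t H) as (A2 & B2 & C2).
  split; [apply continuity_2d_pt_mult; auto|]. split.
  - auto_derive; auto.
  - apply continuity_2d_pt_ext_loc with (fun u t => du f u t * g u t + f u t * du g u t).
    + apply loc_Om; auto. intros u' t' H'. destruct (Hf u' t' H') as (_ & B1' & _). destruct (Hg u' t' H') as (_ & B2' & _).
      unfold du. symmetry. apply (Derive_mult (fun z => f z t') (fun z => g z t')); auto.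
    + apply continuity_2d_pt_plus; apply continuity_2d_pt_mult; auto.
Qed.

Lemma K_pow f n : Kc Om f -> Kc Om (fun u t => f u t ^ n).
Proof.
  intros Hf. induction n.
  - exact (K_const 1).
  - apply (K_mult f (fun u t => f u t ^ n)); auto.
Qed.

Lemma K_icb f : Kc Om f -> (forall u t, Om u t -> 0 < f u t) -> Kc Om (fun u t => icb (f u t)).
Proof.
  intros Hf Hp u t H. destruct (Hf u t H) as (A1 & B1 & C1).
  assert (Hc : forall u t, Om u t -> continuity_2d_pt (fun u t => icb (f u t)) u t).
  { intros u' t' H'. apply continuity_1d_2d_pt_comp.
    - apply continuity_pt_filterlim. apply icb_cont. apply Hp; auto.
    - apply (Hf u' t' H'). }
  split; [apply Hc; auto|]. split.
  - destruct B1 as [l Hl]. eexists. apply (icb_comp_deriv (fun z => f z t)); [apply Hp; auto| exact Hl].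
  - apply continuity_2d_pt_ext_loc with (fun u t => -(1/3) * icb (f u t) ^4 * du f u t).
    + apply loc_Om; auto. intros u' t' H'. destruct (Hf u' t' H') as (_ & B1' & _).
      unfold du. symmetry. apply is_derive_unique. apply (icb_comp_deriv (fun z => f z t')).
      apply Hp; auto. apply Derive_correct; auto.
    + apply continuity_2d_pt_mult; auto. apply continuity_2d_pt_mult. apply continuity_2d_pt_const.
      apply cont_pow. apply Hc; auto.
Qed.

End K.

Definition Gf (x1 x2 x3 x4 y1 y2 y3 y4 v0 v1 v2 v3 w0 w1 w2 w3 : R) : R :=
  (x2 * (w2 - 2/3*(v1*y2 + x1*w2 - w1*x2 - y1*v2)*y2 - 1/3*(v1*y3 + x1*w3 - w1*x3 - y1*v3)*y1)
   - y2 * (v2 - 2/3*(v1*y2 + x1*w2 - w1*x2 - y1*v2)*x2 - 1/3*(v1*y3 + x1*w3 - w1*x3 - y1*v3)*x1))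
  + 2/3*((x2*y3 - y2*x3)*(x1*w1 - y1*v1) - (x2*y4 - y2*x4)*(x1*w0 - y1*v0) + (x2*y3 - y2*x3)*(x2*w0 - y2*v0)).

Lemma key_alg (x1 x2 y1 y2 k0 k1 k2 v0 v1 v2 v3 v4 w0 w1 w2 w3 w4 : R) :
  x1*y2 - y1*x2 = 1 ->
  let x3 := -k0*x1 in let y3 := -k0*y1 in
  let x4 := -k1*x1 - k0*x2 in let y4 := -k1*y1 - k0*y2 in
  let x5 := -k2*x1 - 2*k1*x2 + k0^2*x1 in let y5 := -k2*y1 - 2*k1*y2 + k0^2*y1 in
  Derive (fun e => Poly (x1 + e*v1) (x2 + e*v2) (x3 + e*v3) (x4 + e*v4) (y1 + e*w1) (y2 + e*w2) (y3 + e*w3) (y4 + e*w4)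
      (1 + e*(-(1/3)*(v1*y2 + x1*w2 - w1*x2 - y1*v2)))) 0
  = Derive (fun e => Gf (x1 + e*x2) (x2 + e*x3) (x3 + e*x4) (x4 + e*x5) (y1 + e*y2) (y2 + e*y3) (y3 + e*y4) (y4 + e*y5)
      (v0 + e*v1) (v1 + e*v2) (v2 + e*v3) (v3 + e*v4) (w0 + e*w1) (w1 + e*w2) (w2 + e*w3) (w3 + e*w4)) 0
    + 2/3*(k2 + k0^2)*(x1*w0 - y1*v0).
Proof.
  intros HD x3 y3 x4 y4 x5 y5.
  eassert (H1 : is_derive (fun e : R => Poly (x1 + e*v1) (x2 + e*v2) (x3 + e*v3) (x4 + e*v4) (y1 + e*w1) (y2 + e*w2) (y3 + e*w3) (y4 + e*w4)
      (1 + e*(-(1/3)*(v1*y2 + x1*w2 - w1*x2 - y1*v2)))) 0 _).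
  { unfold Poly, PN, PNp, PP1, PP2, PD1, PD2. auto_derive. exact I. reflexivity. }
  eassert (H2 : is_derive (fun e : R => Gf (x1 + e*x2) (x2 + e*x3) (x3 + e*x4) (x4 + e*x5) (y1 + e*y2) (y2 + e*y3) (y3 + e*y4) (y4 + e*y5)
      (v0 + e*v1) (v1 + e*v2) (v2 + e*v3) (v3 + e*v4) (w0 + e*w1) (w1 + e*w2) (w2 + e*w3) (w3 + e*w4)) 0 _).
  { unfold Gf. auto_derive. exact I. reflexivity. }
  rewrite (is_derive_unique _ _ _ H1), (is_derive_unique _ _ _ H2).
  unfold x3, y3, x4, y4, x5, y5.
  destruct (Req_dec x1 0) as [Hx|Hx].
  - assert (Hy : y1 <> 0). { intro Hy. rewrite Hx, Hy in HD. lra. }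
    assert (E : x2 = (x1*y2 - 1)/y1) by (unfold Rdiv; apply (Rmult_eq_reg_r y1); [rewrite Rmult_assoc, Rinv_l; nra | exact Hy]).
    rewrite E. field. exact Hy.
  - assert (E : y2 = (1 + y1*x2)/x1) by (unfold Rdiv; apply (Rmult_eq_reg_r x1); [rewrite Rmult_assoc, Rinv_l; nra | exact Hx]).
    rewrite E. field. exact Hx.
Qed.

Ltac dU H := let E := fresh "E" in
  assert (E := is_derive_unique _ _ _ H); simpl in E.

Lemma chain_Poly (f1 f2 f3 f4 g1 g2 g3 g4 q : R -> R) z0 a1 a2 a3 a4 b1 b2 b3 b4 c :
  is_derive f1 z0 a1 -> is_derive f2 z0 a2 -> is_derive f3 z0 a3 -> is_derive f4 z0 a4 ->
  is_derive g1 z0 b1 -> is_derive g2 z0 b2 -> is_derive g3 z0 b3 -> is_derive g4 z0 b4 ->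
  is_derive q z0 c ->
  Derive (fun z => Poly (f1 z) (f2 z) (f3 z) (f4 z) (g1 z) (g2 z) (g3 z) (g4 z) (q z)) z0 =
  Derive (fun e => Poly (f1 z0 + e*a1) (f2 z0 + e*a2) (f3 z0 + e*a3) (f4 z0 + e*a4)
                        (g1 z0 + e*b1) (g2 z0 + e*b2) (g3 z0 + e*b3) (g4 z0 + e*b4) (q z0 + e*c)) 0.
Proof.
  intros A1 A2 A3 A4 B1 B2 B3 B4 C.
  assert (E1 : Derive (fun x => f1 x) z0 = a1) by (apply is_derive_unique; exact A1).
  assert (E2 : Derive (fun x => f2 x) z0 = a2) by (apply is_derive_unique; exact A2).
  assert (E3 : Derive (fun x => f3 x) z0 = a3) by (apply is_derive_unique; exact A3).
  assert (E4 : Derive (fun x => f4 x) z0 = a4) by (apply is_derive_unique; exact A4).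
  assert (F1 : Derive (fun x => g1 x) z0 = b1) by (apply is_derive_unique; exact B1).
  assert (F2 : Derive (fun x => g2 x) z0 = b2) by (apply is_derive_unique; exact B2).
  assert (F3 : Derive (fun x => g3 x) z0 = b3) by (apply is_derive_unique; exact B3).
  assert (F4 : Derive (fun x => g4 x) z0 = b4) by (apply is_derive_unique; exact B4).
  assert (G1 : Derive (fun x => q x) z0 = c) by (apply is_derive_unique; exact C).
  eassert (H1 : is_derive (fun z : R => Poly (f1 z) (f2 z) (f3 z) (f4 z) (g1 z) (g2 z) (g3 z) (g4 z) (q z)) z0 _).
  { unfold Poly, PN, PNp, PP1, PP2, PD1, PD2. auto_derive.
    repeat split; eexists; eassumption. reflexivity. }
  eassert (H2 : is_derive (fun e : R => Poly (f1 z0 + e*a1) (f2 z0 + e*a2) (f3 z0 + e*a3) (f4 z0 + e*a4)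
                        (g1 z0 + e*b1) (g2 z0 + e*b2) (g3 z0 + e*b3) (g4 z0 + e*b4) (q z0 + e*c)) 0 _).
  { unfold Poly, PN, PNp, PP1, PP2, PD1, PD2. auto_derive. exact I. reflexivity. }
  rewrite (is_derive_unique _ _ _ H1), (is_derive_unique _ _ _ H2).
  rewrite E1, E2, E3, E4, F1, F2, F3, F4, G1. ring.
Qed.

Lemma chain_G (f1 f2 f3 f4 g1 g2 g3 g4 h0 h1 h2 h3 k0 k1 k2 k3 : R -> R) z0
   a1 a2 a3 a4 b1 b2 b3 b4 c0 c1 c2 c3 d0 d1 d2 d3 :
  is_derive f1 z0 a1 -> is_derive f2 z0 a2 -> is_derive f3 z0 a3 -> is_derive f4 z0 a4 ->
  is_derive g1 z0 b1 -> is_derive g2 z0 b2 -> is_derive g3 z0 b3 -> is_derive g4 z0 b4 ->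
  is_derive h0 z0 c0 -> is_derive h1 z0 c1 -> is_derive h2 z0 c2 -> is_derive h3 z0 c3 ->
  is_derive k0 z0 d0 -> is_derive k1 z0 d1 -> is_derive k2 z0 d2 -> is_derive k3 z0 d3 ->
  is_derive (fun z => Gf (f1 z) (f2 z) (f3 z) (f4 z) (g1 z) (g2 z) (g3 z) (g4 z)
                         (h0 z) (h1 z) (h2 z) (h3 z) (k0 z) (k1 z) (k2 z) (k3 z)) z0
  (Derive (fun e => Gf (f1 z0 + e*a1) (f2 z0 + e*a2) (f3 z0 + e*a3) (f4 z0 + e*a4)
                        (g1 z0 + e*b1) (g2 z0 + e*b2) (g3 z0 + e*b3) (g4 z0 + e*b4)
                        (h0 z0 + e*c0) (h1 z0 + e*c1) (h2 z0 + e*c2) (h3 z0 + e*c3)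
                        (k0 z0 + e*d0) (k1 z0 + e*d1) (k2 z0 + e*d2) (k3 z0 + e*d3)) 0).
Proof.
  intros A1 A2 A3 A4 B1 B2 B3 B4 C0 C1 C2 C3 D0 D1 D2 D3.
  assert (E1 : Derive (fun x => f1 x) z0 = a1) by (apply is_derive_unique; exact A1).
  assert (E2 : Derive (fun x => f2 x) z0 = a2) by (apply is_derive_unique; exact A2).
  assert (E3 : Derive (fun x => f3 x) z0 = a3) by (apply is_derive_unique; exact A3).
  assert (E4 : Derive (fun x => f4 x) z0 = a4) by (apply is_derive_unique; exact A4).
  assert (F1 : Derive (fun x => g1 x) z0 = b1) by (apply is_derive_unique; exact B1).
  assert (F2 : Derive (fun x => g2 x) z0 = b2) by (apply is_derive_unique; exact B2).
  assert (F3 : Derive (fun x => g3 x) z0 = b3) by (apply is_derive_unique; exact B3).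
  assert (F4 : Derive (fun x => g4 x) z0 = b4) by (apply is_derive_unique; exact B4).
  assert (G0 : Derive (fun x => h0 x) z0 = c0) by (apply is_derive_unique; exact C0).
  assert (G1 : Derive (fun x => h1 x) z0 = c1) by (apply is_derive_unique; exact C1).
  assert (G2 : Derive (fun x => h2 x) z0 = c2) by (apply is_derive_unique; exact C2).
  assert (G3 : Derive (fun x => h3 x) z0 = c3) by (apply is_derive_unique; exact C3).
  assert (K0 : Derive (fun x => k0 x) z0 = d0) by (apply is_derive_unique; exact D0).
  assert (K1 : Derive (fun x => k1 x) z0 = d1) by (apply is_derive_unique; exact D1).
  assert (K2 : Derive (fun x => k2 x) z0 = d2) by (apply is_derive_unique; exact D2).
  assert (K3 : Derive (fun x => k3 x) z0 = d3) by (apply is_derive_unique; exact D3).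
  eassert (H2 : is_derive (fun e : R => Gf (f1 z0 + e*a1) (f2 z0 + e*a2) (f3 z0 + e*a3) (f4 z0 + e*a4)
                        (g1 z0 + e*b1) (g2 z0 + e*b2) (g3 z0 + e*b3) (g4 z0 + e*b4)
                        (h0 z0 + e*c0) (h1 z0 + e*c1) (h2 z0 + e*c2) (h3 z0 + e*c3)
                        (k0 z0 + e*d0) (k1 z0 + e*d1) (k2 z0 + e*d2) (k3 z0 + e*d3)) 0 _).
  { unfold Gf. auto_derive. exact I. reflexivity. }
  rewrite (is_derive_unique _ _ _ H2).
  unfold Gf. auto_derive.
  - repeat split; eexists; eassumption.
  - rewrite E1, E2, E3, E4, F1, F2, F3, F4, G0, G1, G2, G3, K0, K1, K2, K3. ring.
Qed.

Lemma der_det4 (f g h k : R -> R) s f' g' h' k' :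
  is_derive f s f' -> is_derive g s g' -> is_derive h s h' -> is_derive k s k' ->
  is_derive (fun r => f r * g r - h r * k r) s (f' * g s + f s * g' - (h' * k s + h s * k')).
Proof.
  intros A B C D.
  assert (E1 : Derive (fun x => f x) s = f') by (apply is_derive_unique; exact A).
  assert (E2 : Derive (fun x => g x) s = g') by (apply is_derive_unique; exact B).
  assert (E3 : Derive (fun x => h x) s = h') by (apply is_derive_unique; exact C).
  assert (E4 : Derive (fun x => k x) s = k') by (apply is_derive_unique; exact D).
  auto_derive.
  - repeat split; eexists; eassumption.
  - rewrite E1, E2, E3, E4. ring.
Qed.

Lemma is_derive_loc_const (f : R -> R) t c : locally t (fun s => f s = c) -> is_derive f t 0.
Proof.
  intros H. apply is_derive_ext_loc with (fun _ => c).
  - eapply filter_imp; [| exact H]. intros s Hs; simpl; symmetry; exact Hs.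
  - auto_derive; [exact I | reflexivity].
Qed.

Lemma Rpower_1_l y : Rpower 1 y = 1.
Proof. unfold Rpower. rewrite ln_1, Rmult_0_r. apply exp_0. Qed.

Lemma der_nm (f g : R -> R) t f' g' : is_derive f t f' -> is_derive g t g' ->
  is_derive (fun s => - f s * g s) t (- f' * g t - f t * g').
Proof.
  intros A B.
  assert (E1 : Derive (fun s => f s) t = f') by (apply is_derive_unique; exact A).
  assert (E2 : Derive (fun s => g s) t = g') by (apply is_derive_unique; exact B).
  auto_derive. split; [eexists; exact A| split; [eexists; exact B | exact I]].
  rewrite E1, E2. ring.
Qed.

Lemma der_nm2 (f g h k : R -> R) t f' g' h' k' : is_derive f t f' -> is_derive g t g' ->
  is_derive h t h' -> is_derive k t k' ->
  is_derive (fun s => - f s * g s - h s * k s) t (- f' * g t - f t * g' - (h' * k t + h t * k')).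
Proof.
  intros A B C D.
  assert (E1 : Derive (fun s => f s) t = f') by (apply is_derive_unique; exact A).
  assert (E2 : Derive (fun s => g s) t = g') by (apply is_derive_unique; exact B).
  assert (E3 : Derive (fun s => h s) t = h') by (apply is_derive_unique; exact C).
  assert (E4 : Derive (fun s => k s) t = k') by (apply is_derive_unique; exact D).
  auto_derive. repeat split; eexists; eassumption.
  rewrite E1, E2, E3, E4. ring.
Qed.

Section Base.
Variables (lo hi : Rbar) (x y : R -> R).
Hypotheses (Hsx : smooth_on lo hi x) (Hsy : smooth_on lo hi y)
  (Hdet : forall t, inI lo hi t -> ea_det x y t = 1).

Lemma dx n t : inI lo hi t -> is_derive (Derive_n x n) t (Derive_n x (S n) t).
Proof. intros Ht. apply der_n. exact (Hsx (S n) t Ht). Qed.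
Lemma dy n t : inI lo hi t -> is_derive (Derive_n y n) t (Derive_n y (S n) t).
Proof. intros Ht. apply der_n. exact (Hsy (S n) t Ht). Qed.

Lemma smxy t : inI lo hi t -> forall n, ex_derive (Derive_n x n) t /\ ex_derive (Derive_n y n) t.
Proof. intros Ht n. split; [exact (Hsx (S n) t Ht) | exact (Hsy (S n) t Ht)]. Qed.

Lemma loc_I P t : inI lo hi t -> (forall s, inI lo hi s -> P s) -> locally t P.
Proof. intros Ht HP. eapply filter_imp; [| apply (inI_locally _ _ _ Ht)]. exact HP. Qed.

Lemma D_eq t : ea_det x y t = PD1 (Derive_n x 1 t) (Derive_n x 2 t) (Derive_n y 1 t) (Derive_n y 2 t).
Proof. reflexivity. Qed.

Lemma d1_zero t : inI lo hi t -> PD1 (Derive_n x 1 t) (Derive_n x 3 t) (Derive_n y 1 t) (Derive_n y 3 t) = 0.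
Proof.
  intros Ht. pose proof (ea_det_deriv x y t (smxy t Ht)) as H1.
  assert (H2 : is_derive (ea_det x y) t 0).
  { apply (is_derive_loc_const _ _ 1). apply loc_I; auto. }
  unfold PD1. rewrite <- (is_derive_unique _ _ _ H1). apply is_derive_unique. exact H2.
Qed.

Lemma d2_zero t : inI lo hi t ->
  PD2 (Derive_n x 1 t) (Derive_n x 2 t) (Derive_n x 3 t) (Derive_n x 4 t)
      (Derive_n y 1 t) (Derive_n y 2 t) (Derive_n y 3 t) (Derive_n y 4 t) = 0.
Proof.
  intros Ht.
  pose proof (der_det4 (Derive_n x 1) (Derive_n y 3) (Derive_n y 1) (Derive_n x 3) t _ _ _ _
     (dx 1 t Ht) (dy 3 t Ht) (dy 1 t Ht) (dx 3 t Ht)) as H1.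
  assert (H2 : is_derive (fun r => Derive_n x 1 r * Derive_n y 3 r - Derive_n y 1 r * Derive_n x 3 r) t 0).
  { apply (is_derive_loc_const _ _ 0). apply loc_I; auto. intros s Hs. exact (d1_zero s Hs). }
  pose proof (is_derive_unique _ _ _ H1) as E1. rewrite (is_derive_unique _ _ _ H2) in E1.
  unfold PD2. lra.
Qed.

Definition K0 t := Derive_n x 2 t * Derive_n y 3 t - Derive_n y 2 t * Derive_n x 3 t.
Definition K1 t := Derive_n x 2 t * Derive_n y 4 t - Derive_n y 2 t * Derive_n x 4 t.
Definition K2 t := Derive_n x 3 t * Derive_n y 4 t + Derive_n x 2 t * Derive_n y 5 t
                 - Derive_n y 3 t * Derive_n x 4 t - Derive_n y 2 t * Derive_n x 5 t.

Lemma curv_K0 t : inI lo hi t -> ea_curv x y t = K0 t.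
Proof.
  intros Ht.
  assert (Hl : locally t (fun s => 0 < ea_det x y s /\ forall n, ex_derive (Derive_n x n) s /\ ex_derive (Derive_n y n) s)).
  { apply loc_I; auto. intros s Hs. split; [rewrite Hdet by exact Hs; lra | apply smxy; exact Hs]. }
  pose proof (curve_formula x y t Hl) as H.
  unfold ea_phi in H. rewrite Hdet in H by exact Ht. rewrite Rpower_1_l, icb_1, Rmult_1_r in H.
  rewrite H. unfold Poly, PN, PNp, PP1, PP2. rewrite (d1_zero t Ht), (d2_zero t Ht). unfold K0. field.
Qed.

Lemma x3_eq t : inI lo hi t -> Derive_n x 3 t = - K0 t * Derive_n x 1 t.
Proof.
  intros Ht. pose proof (d1_zero t Ht) as A. pose proof (Hdet t Ht) as B. rewrite D_eq in B.
  unfold PD1 in A, B. unfold K0.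
  assert (C : Derive_n x 3 t * (Derive_n x 1 t * Derive_n y 2 t - Derive_n y 1 t * Derive_n x 2 t)
      + (Derive_n x 2 t * Derive_n y 3 t - Derive_n y 2 t * Derive_n x 3 t) * Derive_n x 1 t
      = Derive_n x 2 t * (Derive_n x 1 t * Derive_n y 3 t - Derive_n y 1 t * Derive_n x 3 t)) by ring.
  rewrite A, B in C. lra.
Qed.

Lemma y3_eq t : inI lo hi t -> Derive_n y 3 t = - K0 t * Derive_n y 1 t.
Proof.
  intros Ht. pose proof (d1_zero t Ht) as A. pose proof (Hdet t Ht) as B. rewrite D_eq in B.
  unfold PD1 in A, B. unfold K0.
  assert (C : Derive_n y 3 t * (Derive_n x 1 t * Derive_n y 2 t - Derive_n y 1 t * Derive_n x 2 t)
      + (Derive_n x 2 t * Derive_n y 3 t - Derive_n y 2 t * Derive_n x 3 t) * Derive_n y 1 t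
      = Derive_n y 2 t * (Derive_n x 1 t * Derive_n y 3 t - Derive_n y 1 t * Derive_n x 3 t)) by ring.
  rewrite A, B in C. lra.
Qed.

Lemma K0_der t : inI lo hi t -> is_derive K0 t (K1 t).
Proof.
  intros Ht.
  pose proof (der_det4 (Derive_n x 2) (Derive_n y 3) (Derive_n y 2) (Derive_n x 3) t _ _ _ _
     (dx 2 t Ht) (dy 3 t Ht) (dy 2 t Ht) (dx 3 t Ht)) as H1.
  unfold K0, K1. eapply is_derive_ext; [intros; reflexivity|].
  replace (Derive_n x 2 t * Derive_n y 4 t - Derive_n y 2 t * Derive_n x 4 t) with
    (Derive_n x 3 t * Derive_n y 3 t + Derive_n x 2 t * Derive_n y 4 t -
     (Derive_n y 3 t * Derive_n x 3 t + Derive_n y 2 t * Derive_n x 4 t)) by ring.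
  exact H1.
Qed.

Lemma K1_der t : inI lo hi t -> is_derive K1 t (K2 t).
Proof.
  intros Ht.
  pose proof (der_det4 (Derive_n x 2) (Derive_n y 4) (Derive_n y 2) (Derive_n x 4) t _ _ _ _
     (dx 2 t Ht) (dy 4 t Ht) (dy 2 t Ht) (dx 4 t Ht)) as H1.
  unfold K1, K2. eapply is_derive_ext; [intros; reflexivity|].
  replace (Derive_n x 3 t * Derive_n y 4 t + Derive_n x 2 t * Derive_n y 5 t
                 - Derive_n y 3 t * Derive_n x 4 t - Derive_n y 2 t * Derive_n x 5 t) with
    (Derive_n x 3 t * Derive_n y 4 t + Derive_n x 2 t * Derive_n y 5 t -
     (Derive_n y 3 t * Derive_n x 4 t + Derive_n y 2 t * Derive_n x 5 t)) by ring.
  exact H1.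
Qed.

Lemma curv_der t : inI lo hi t -> is_derive (ea_curv x y) t (K1 t).
Proof.
  intros Ht. apply is_derive_ext_loc with K0.
  - apply loc_I; auto. intros s Hs. symmetry. apply curv_K0; auto.
  - apply K0_der; auto.
Qed.

Lemma curv_der2 t : inI lo hi t -> is_derive (Derive (ea_curv x y)) t (K2 t).
Proof.
  intros Ht. apply is_derive_ext_loc with K1.
  - apply loc_I; auto. intros s Hs. symmetry. apply is_derive_unique, curv_der; auto.
  - apply K1_der; auto.
Qed.

Lemma x4_eq t : inI lo hi t -> Derive_n x 4 t = - K1 t * Derive_n x 1 t - K0 t * Derive_n x 2 t.
Proof.
  intros Ht.
  pose proof (der_nm K0 (Derive_n x 1) t _ _ (K0_der t Ht) (dx 1 t Ht)) as H.
  apply is_derive_unique. apply is_derive_ext_loc with (fun s => - K0 s * Derive_n x 1 s); [|exact H].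
  apply loc_I; auto. intros s Hs. symmetry. apply x3_eq; auto.
Qed.

Lemma y4_eq t : inI lo hi t -> Derive_n y 4 t = - K1 t * Derive_n y 1 t - K0 t * Derive_n y 2 t.
Proof.
  intros Ht.
  pose proof (der_nm K0 (Derive_n y 1) t _ _ (K0_der t Ht) (dy 1 t Ht)) as H.
  apply is_derive_unique. apply is_derive_ext_loc with (fun s => - K0 s * Derive_n y 1 s); [|exact H].
  apply loc_I; auto. intros s Hs. symmetry. apply y3_eq; auto.
Qed.

Lemma x5_eq t : inI lo hi t -> Derive_n x 5 t = - K2 t * Derive_n x 1 t - 2 * K1 t * Derive_n x 2 t + K0 t ^ 2 * Derive_n x 1 t.
Proof.
  intros Ht.
  pose proof (der_nm2 K1 (Derive_n x 1) K0 (Derive_n x 2) t _ _ _ _ (K1_der t Ht) (dx 1 t Ht) (K0_der t Ht) (dx 2 t Ht)) as H.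
  change (Derive_n x 5 t) with (Derive (Derive_n x 4) t).
  rewrite (is_derive_unique _ _ _ (is_derive_ext_loc _ (Derive_n x 4) t _ (loc_I _ t Ht (fun s Hs => eq_sym (x4_eq s Hs))) H)).
  rewrite (x3_eq t Ht). ring.
Qed.

Lemma y5_eq t : inI lo hi t -> Derive_n y 5 t = - K2 t * Derive_n y 1 t - 2 * K1 t * Derive_n y 2 t + K0 t ^ 2 * Derive_n y 1 t.
Proof.
  intros Ht.
  pose proof (der_nm2 K1 (Derive_n y 1) K0 (Derive_n y 2) t _ _ _ _ (K1_der t Ht) (dy 1 t Ht) (K0_der t Ht) (dy 2 t Ht)) as H.
  change (Derive_n y 5 t) with (Derive (Derive_n y 4) t).
  rewrite (is_derive_unique _ _ _ (is_derive_ext_loc _ (Derive_n y 4) t _ (loc_I _ t Ht (fun s Hs => eq_sym (y4_eq s Hs))) H)).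
  rewrite (y3_eq t Ht). ring.
Qed.

End Base.

Lemma inI_between lo hi a b t : inI lo hi a -> inI lo hi b -> a <= t <= b -> inI lo hi t.
Proof.
  intros [A1 A2] [B1 B2] [H1 H2]. split.
  - apply Rbar_lt_le_trans with (Finite a); [exact A1| simpl; exact H1].
  - apply Rbar_le_lt_trans with (Finite b); [simpl; exact H2| exact B2].
Qed.

Lemma ball_R (c e s : R) : ball c e s <-> Rabs (s - c) < e.
Proof. unfold ball; simpl; unfold AbsRing_ball, abs, minus, plus, opp; simpl. tauto. Qed.

Lemma cont2d_1d f u t : continuity_2d_pt f u t -> continuous (fun s => f u s) t.
Proof.
  intros H. apply filterlim_locally. intros eps. destruct (H eps) as [d Hd].
  exists d. intros s Hs. apply ball_R. apply ball_R in Hs. apply Hd; auto.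
  rewrite Rminus_eq_0, Rabs_R0. apply cond_pos.
Qed.

Lemma cont2d_1d' f u t : continuity_2d_pt f u t -> continuous (fun z => f z t) u.
Proof.
  intros H. apply filterlim_locally. intros eps. destruct (H eps) as [d Hd].
  exists d. intros s Hs. apply ball_R. apply ball_R in Hs. apply Hd; auto.
  rewrite Rminus_eq_0, Rabs_R0. apply cond_pos.
Qed.

Lemma cR_plus (f g : R -> R) t : continuous f t -> continuous g t -> continuous (fun s => f s + g s) t.
Proof. intros A B. exact (continuous_plus f g t A B). Qed.
Lemma cR_mult (f g : R -> R) t : continuous f t -> continuous g t -> continuous (fun s => f s * g s) t.
Proof. intros A B. exact (continuous_mult f g t A B). Qed.
Lemma cR_opp (f : R -> R) t : continuous f t -> continuous (fun s => - f s) t.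
Proof. intros A. exact (continuous_opp f t A). Qed.
Lemma cR_minus (f g : R -> R) t : continuous f t -> continuous g t -> continuous (fun s => f s - g s) t.
Proof. intros A B. apply cR_plus; auto. apply cR_opp; auto. Qed.
Lemma cR_const (c : R) t : continuous (fun _ : R => c) t.
Proof. exact (continuous_const c t). Qed.
Lemma cR_pow (f : R -> R) n t : continuous f t -> continuous (fun s => f s ^ n) t.
Proof. intros A. induction n. exact (cR_const 1 t). apply (cR_mult f (fun s => f s ^ n)); auto. Qed.
Lemma cR_der (f : R -> R) t l : is_derive f t l -> continuous f t.
Proof. intros H. apply (@ex_derive_continuous R_AbsRing R_NormedModule f t). eexists; exact H. Qed.

Lemma zero_left (f : R -> R) c e : continuous f c -> 0 < e -> (forall s, c - e < s < c -> f s = 0) -> f c = 0.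
Proof.
  intros Hc He Hz. apply NNPP. intros Hn.
  assert (Hp : 0 < Rabs (f c)) by (apply Rabs_pos_lt; exact Hn).
  destruct (proj1 (filterlim_locally f (f c)) Hc (mkposreal _ Hp)) as [d Hd].
  set (s := c - Rmin d e / 2).
  assert (Hm : 0 < Rmin d e) by (apply Rmin_pos; [apply cond_pos| exact He]).
  assert (Hs1 : c - e < s < c) by (unfold s; split; [pose proof (Rmin_r d e)|]; lra).
  assert (K : ball c d s) by (apply ball_R; unfold s; rewrite Rabs_left by lra; pose proof (Rmin_l d e); lra).
  specialize (Hd s K). rewrite (Hz s Hs1) in Hd. unfold ball in Hd; simpl in Hd; unfold AbsRing_ball, abs, minus, plus, opp in Hd; simpl in Hd.
  rewrite Rplus_0_l, Rabs_Ropp in Hd. lra.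
Qed.

Lemma zero_right (f : R -> R) c e : continuous f c -> 0 < e -> (forall s, c < s < c + e -> f s = 0) -> f c = 0.
Proof.
  intros Hc He Hz. apply NNPP. intros Hn.
  assert (Hp : 0 < Rabs (f c)) by (apply Rabs_pos_lt; exact Hn).
  destruct (proj1 (filterlim_locally f (f c)) Hc (mkposreal _ Hp)) as [d Hd].
  set (s := c + Rmin d e / 2).
  assert (Hm : 0 < Rmin d e) by (apply Rmin_pos; [apply cond_pos| exact He]).
  assert (Hs1 : c < s < c + e) by (unfold s; split; [|pose proof (Rmin_r d e)]; lra).
  assert (K : ball c d s) by (apply ball_R; unfold s; rewrite Rabs_right by lra; pose proof (Rmin_l d e); lra).
  specialize (Hd s K). rewrite (Hz s Hs1) in Hd. unfold ball in Hd; simpl in Hd; unfold AbsRing_ball, abs, minus, plus, opp in Hd; simpl in Hd.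
  rewrite Rplus_0_l, Rabs_Ropp in Hd. lra.
Qed.

Lemma poly_cont1 (f2 f3 f4 f5 g2 g3 g4 g5 : R -> R) t :
  continuous f2 t -> continuous f3 t -> continuous f4 t -> continuous f5 t ->
  continuous g2 t -> continuous g3 t -> continuous g4 t -> continuous g5 t ->
  continuous (fun s => f3 s * g4 s + f2 s * g5 s - g3 s * f4 s - g2 s * f5 s +
     (f2 s * g3 s - g2 s * f3 s) ^ 2) t.
Proof.
  intros A2 A3 A4 A5 B2 B3 B4 B5.
  apply cR_plus; [|apply cR_pow; apply cR_minus; apply cR_mult; auto].
  apply cR_minus; [apply cR_minus; [apply cR_plus|]|]; apply cR_mult; auto.
Qed.

Lemma poly_cont2 (f g h k : R -> R) t :
  continuous f t -> continuous g t -> continuous h t -> continuous k t ->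
  continuous (fun s => f s * g s - h s * k s) t.
Proof. intros A B C D. apply cR_minus; apply cR_mult; auto. Qed.

Ltac ballR H := unfold ball in H; simpl in H; unfold AbsRing_ball, abs, minus, plus, opp in H; simpl in H.

Section GFV.
Variables (lo hi : Rbar) (x y : R -> R) (X Y : R -> R -> R) (a b : R).
Hypotheses (Hsx : smooth_on lo hi x) (Hsy : smooth_on lo hi y)
  (Hdet : forall t, inI lo hi t -> ea_det x y t = 1)
  (HX : Sm lo hi X) (HY : Sm lo hi Y)
  (H0 : forall t, inI lo hi t -> X 0 t = x t /\ Y 0 t = y t)
  (Ha : inI lo hi a) (Hb : inI lo hi b) (Hab : a <= b)
  (Hsupp : forall u t, inI lo hi t -> (t < a \/ b < t) -> X u t = x t /\ Y u t = y t).

Definition Dv u t := ea_det (X u) (Y u) t.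
Definition Om u t := inI lo hi t /\ 0 < Dv u t.
Definition L u t := ea_curv (X u) (Y u) t * ea_phi (X u) (Y u) t.
Definition PL u t := Poly (Xj X 1 u t) (Xj X 2 u t) (Xj X 3 u t) (Xj X 4 u t)
   (Xj Y 1 u t) (Xj Y 2 u t) (Xj Y 3 u t) (Xj Y 4 u t) (icb (Dv u t)).

Lemma Dv_cont u t : inI lo hi t -> continuity_2d_pt Dv u t.
Proof.
  intros Ht.
  apply continuity_2d_pt_ext with (fun u t => Xj X 1 u t * Xj Y 2 u t - Xj Y 1 u t * Xj X 2 u t).
  { intros; reflexivity. }
  apply continuity_2d_pt_minus; apply continuity_2d_pt_mult; apply (Sm_cont lo hi); auto; apply Sm_Xj; auto.
Qed.

Lemma Om_open : Open2 Om.
Proof.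
  intros u t [Ht Hp]. destruct (inI_open _ _ _ Ht) as [e1 He1].
  destruct (Dv_cont u t Ht (mkposreal _ Hp)) as [e2 He2].
  assert (He : 0 < Rmin e1 e2) by (apply Rmin_pos; apply cond_pos).
  exists (mkposreal _ He). simpl. intros u' t' H1 H2. split.
  - apply He1. eapply Rlt_le_trans; [exact H2| apply Rmin_l].
  - assert (K := He2 u' t' (Rlt_le_trans _ _ _ H1 (Rmin_r _ _)) (Rlt_le_trans _ _ _ H2 (Rmin_r _ _))).
    simpl in K. apply Rabs_lt_between in K. lra.
Qed.

Lemma K_base f : Sm lo hi f -> Kc Om f.
Proof.
  intros H u t [Ht _]. split; [apply (Sm_cont lo hi); auto|]. split.
  - exact (proj2 (Sm_ext lo hi f u t H Ht)).
  - apply (Sm_cont lo hi); auto. apply Sm_du; auto.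
Qed.

Lemma K_Dv : Kc Om Dv.
Proof.
  intros u t Hut.
  apply (K_minus Om Om_open (fun u t => Xj X 1 u t * Xj Y 2 u t) (fun u t => Xj Y 1 u t * Xj X 2 u t));
   [apply K_mult; [exact Om_open | apply K_base, Sm_Xj; auto | apply K_base, Sm_Xj; auto]
   |apply K_mult; [exact Om_open | apply K_base, Sm_Xj; auto | apply K_base, Sm_Xj; auto] | exact Hut].
Qed.

Lemma K_Q : Kc Om (fun u t => icb (Dv u t)).
Proof. apply K_icb. exact Om_open. exact K_Dv. intros u t [_ H]; exact H. Qed.

Ltac kt := repeat first
  [ exact K_Q
  | apply K_base; apply Sm_Xj; assumption
  | apply K_minus; [exact Om_open | | ]
  | apply K_plus; [exact Om_open | | ]
  | apply K_mult; [exact Om_open | | ]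
  | apply K_pow; [exact Om_open | ]
  | apply K_opp; [exact Om_open | ]
  | apply K_const ].

Lemma K_PL : Kc Om PL.
Proof.
  unfold PL, Poly, PN, PNp, PP1, PP2, PD1, PD2, Rdiv. kt.
Qed.

Lemma L_PL u t : Om u t -> L u t = PL u t.
Proof.
  intros H. unfold L, PL.
  apply curve_formula.
  pose proof (locally_2d_1d_const_x _ _ _ (Om_open u t H)) as K.
  eapply filter_imp; [| exact K]. intros s [Hs Hp]. split; [exact Hp|].
  intros n. split.
  - exact (proj1 (Sm_ext lo hi (Xj X n) u s (Sm_Xj _ _ _ n HX) Hs)).
  - exact (proj1 (Sm_ext lo hi (Xj Y n) u s (Sm_Xj _ _ _ n HY) Hs)).
Qed.

Lemma L_PL_loc u t : Om u t -> locally_2d (fun u' t' => L u' t' = PL u' t') u t.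
Proof. intros H. apply (loc_Om Om Om_open). exact H. intros; apply L_PL; auto. Qed.

Lemma X0j j t : inI lo hi t -> Xj X j 0 t = Derive_n x j t.
Proof.
  intros Ht. unfold Xj. apply Derive_n_ext_loc.
  eapply filter_imp; [| apply (inI_locally _ _ _ Ht)]. intros s Hs. apply H0; auto.
Qed.
Lemma Y0j j t : inI lo hi t -> Xj Y j 0 t = Derive_n y j t.
Proof.
  intros Ht. unfold Xj. apply Derive_n_ext_loc.
  eapply filter_imp; [| apply (inI_locally _ _ _ Ht)]. intros s Hs. apply H0; auto.
Qed.

Lemma Dv0 t : inI lo hi t -> Dv 0 t = 1.
Proof.
  intros Ht. change (Dv 0 t) with (Xj X 1 0 t * Xj Y 2 0 t - Xj Y 1 0 t * Xj X 2 0 t).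
  rewrite !X0j, !Y0j by exact Ht. rewrite <- (Hdet t Ht). reflexivity.
Qed.

Lemma Om0 t : inI lo hi t -> Om 0 t.
Proof. intros Ht. split; auto. rewrite Dv0; auto; lra. Qed.

Lemma compact : exists d : posreal, forall u t, Rabs u < d -> a <= t <= b -> Om u t.
Proof.
  assert (Hloc : forall t, exists d : posreal, a <= t <= b -> forall u s, Rabs u < d -> Rabs (s - t) < d -> Om u s).
  { intros t. destruct (classic (a <= t <= b)) as [Ht|Ht].
    - assert (Hi : inI lo hi t) by (apply (inI_between lo hi a b); auto).
      destruct (Om_open 0 t (Om0 t Hi)) as [d Hd]. exists d. intros _ u s Hu Hs.
      apply Hd; auto. rewrite Rminus_0_r; exact Hu.
    - exists (mkposreal 1 Rlt_0_1). intros H; contradiction. }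
  set (delta := fun t => proj1_sig (constructive_indefinite_description _ (Hloc t))).
  destruct (compactness_value_1d a b delta) as [d Hd].
  exists d. intros u t Hu Ht. specialize (Hd t Ht). apply NNPP. intro HN. apply Hd.
  intros [t0 (Ht0 & H1 & H2)]. apply HN.
  apply (proj2_sig (constructive_indefinite_description _ (Hloc t0)) Ht0).
  - eapply Rlt_le_trans; [exact Hu| exact H2].
  - exact H1.
Qed.


Definition vj (Z : R -> R -> R) j t := Derive (fun z => Xj Z j z t) 0.

Lemma v_der Z j t : Sm lo hi Z -> inI lo hi t -> is_derive (vj Z j) t (vj Z (S j) t).
Proof.
  intros HZ Ht.
  pose proof (Sm_schwarz lo hi (Xj Z j) 0 t (Sm_Xj _ _ _ j HZ) Ht) as E.
  assert (Hex : ex_derive (vj Z j) t) by exact (proj1 (Sm_ext lo hi (du (Xj Z j)) 0 t (Sm_du _ _ _ (Sm_Xj _ _ _ j HZ)) Ht)).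
  pose proof (Derive_correct _ _ Hex) as K.
  assert (Eq : Derive (vj Z j) t = vj Z (S j) t) by (symmetry; exact E).
  rewrite <- Eq. exact K.
Qed.

Lemma ju_der Z j t : Sm lo hi Z -> inI lo hi t -> is_derive (fun z => Xj Z j z t) 0 (vj Z j t).
Proof.
  intros HZ Ht. apply Derive_correct.
  exact (proj2 (Sm_ext lo hi (Xj Z j) 0 t (Sm_Xj _ _ _ j HZ) Ht)).
Qed.

Lemma dPL t : inI lo hi t -> Derive (fun u => L u t) 0 =
  Derive (fun e => Poly (Derive_n x 1 t + e*vj X 1 t) (Derive_n x 2 t + e*vj X 2 t)
    (Derive_n x 3 t + e*vj X 3 t) (Derive_n x 4 t + e*vj X 4 t)
    (Derive_n y 1 t + e*vj Y 1 t) (Derive_n y 2 t + e*vj Y 2 t)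
    (Derive_n y 3 t + e*vj Y 3 t) (Derive_n y 4 t + e*vj Y 4 t)
    (1 + e*(-(1/3)*(vj X 1 t*Derive_n y 2 t + Derive_n x 1 t*vj Y 2 t - vj Y 1 t*Derive_n x 2 t - Derive_n y 1 t*vj X 2 t)))) 0.
Proof.
  intros Ht.
  assert (E1 : Derive (fun u => L u t) 0 = Derive (fun u => PL u t) 0)
    by (apply Derive_ext_loc; exact (locally_2d_1d_const_y _ _ _ (L_PL_loc 0 t (Om0 t Ht)))).
  rewrite E1.
  unfold PL.
  pose proof (der_det4 (fun z => Xj X 1 z t) (fun z => Xj Y 2 z t) (fun z => Xj Y 1 z t) (fun z => Xj X 2 z t) 0
     _ _ _ _ (ju_der X 1 t HX Ht) (ju_der Y 2 t HY Ht) (ju_der Y 1 t HY Ht) (ju_der X 2 t HX Ht)) as HD.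
  assert (HQ := icb_comp_deriv (fun z => Dv z t) 0 _ (proj2 (Om0 t Ht)) HD).
  etransitivity.
  { apply (chain_Poly (fun z => Xj X 1 z t) (fun z => Xj X 2 z t) (fun z => Xj X 3 z t) (fun z => Xj X 4 z t)
      (fun z => Xj Y 1 z t) (fun z => Xj Y 2 z t) (fun z => Xj Y 3 z t) (fun z => Xj Y 4 z t)
      (fun z => icb (Dv z t)) 0 _ _ _ _ _ _ _ _ _
      (ju_der X 1 t HX Ht) (ju_der X 2 t HX Ht) (ju_der X 3 t HX Ht) (ju_der X 4 t HX Ht)
      (ju_der Y 1 t HY Ht) (ju_der Y 2 t HY Ht) (ju_der Y 3 t HY Ht) (ju_der Y 4 t HY Ht) HQ). }
  rewrite !X0j, !Y0j, Dv0, icb_1 by exact Ht.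
  replace (-(1/3) * 1^4 * (vj X 1 t * Derive_n y 2 t + Derive_n x 1 t * vj Y 2 t -
     (vj Y 1 t * Derive_n x 2 t + Derive_n y 1 t * vj X 2 t)))
   with (-(1/3)*(vj X 1 t*Derive_n y 2 t + Derive_n x 1 t*vj Y 2 t - vj Y 1 t*Derive_n x 2 t - Derive_n y 1 t*vj X 2 t)) by ring.
  reflexivity.
Qed.

Definition Ef t := Derive_n (ea_curv x y) 2 t + ea_curv x y t ^ 2.
Definition Gt t := Gf (Derive_n x 1 t) (Derive_n x 2 t) (Derive_n x 3 t) (Derive_n x 4 t)
  (Derive_n y 1 t) (Derive_n y 2 t) (Derive_n y 3 t) (Derive_n y 4 t)
  (vj X 0 t) (vj X 1 t) (vj X 2 t) (vj X 3 t) (vj Y 0 t) (vj Y 1 t) (vj Y 2 t) (vj Y 3 t).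

Lemma Ef_eq t : inI lo hi t -> Ef t = K2 x y t + K0 x y t ^ 2.
Proof.
  intros Ht. unfold Ef. rewrite (curv_K0 lo hi x y Hsx Hsy Hdet t Ht).
  f_equal. exact (is_derive_unique _ _ _ (curv_der2 lo hi x y Hsx Hsy Hdet t Ht)).
Qed.

Lemma Gt_der t : inI lo hi t -> is_derive Gt t
  (Derive (fun u => L u t) 0 - 2/3 * Ef t * (Derive_n x 1 t * vj Y 0 t - Derive_n y 1 t * vj X 0 t)).
Proof.
  intros Ht.
  pose proof (chain_G (Derive_n x 1) (Derive_n x 2) (Derive_n x 3) (Derive_n x 4)
     (Derive_n y 1) (Derive_n y 2) (Derive_n y 3) (Derive_n y 4)
     (vj X 0) (vj X 1) (vj X 2) (vj X 3) (vj Y 0) (vj Y 1) (vj Y 2) (vj Y 3) t _ _ _ _ _ _ _ _ _ _ _ _ _ _ _ _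
     (dx lo hi x Hsx 1 t Ht) (dx lo hi x Hsx 2 t Ht) (dx lo hi x Hsx 3 t Ht) (dx lo hi x Hsx 4 t Ht)
     (dy lo hi y Hsy 1 t Ht) (dy lo hi y Hsy 2 t Ht) (dy lo hi y Hsy 3 t Ht) (dy lo hi y Hsy 4 t Ht)
     (v_der X 0 t HX Ht) (v_der X 1 t HX Ht) (v_der X 2 t HX Ht) (v_der X 3 t HX Ht)
     (v_der Y 0 t HY Ht) (v_der Y 1 t HY Ht) (v_der Y 2 t HY Ht) (v_der Y 3 t HY Ht)) as HG.
  match type of HG with is_derive _ _ ?l => assert (Eq : l =
    Derive (fun u => L u t) 0 - 2/3 * Ef t * (Derive_n x 1 t * vj Y 0 t - Derive_n y 1 t * vj X 0 t)) end.
  2: { rewrite <- Eq. exact HG. }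
  rewrite (dPL t Ht), (Ef_eq t Ht).
  rewrite (x5_eq lo hi x y Hsx Hsy Hdet t Ht), (y5_eq lo hi x y Hsx Hsy Hdet t Ht),
    (x4_eq lo hi x y Hsx Hsy Hdet t Ht), (y4_eq lo hi x y Hsx Hsy Hdet t Ht),
    (x3_eq lo hi x y Hsx Hsy Hdet t Ht), (y3_eq lo hi x y Hsx Hsy Hdet t Ht).
  assert (HD : Derive_n x 1 t * Derive_n y 2 t - Derive_n y 1 t * Derive_n x 2 t = 1)
    by exact (Hdet t Ht).
  pose proof (key_alg (Derive_n x 1 t) (Derive_n x 2 t) (Derive_n y 1 t) (Derive_n y 2 t)
    (K0 x y t) (K1 x y t) (K2 x y t) (vj X 0 t) (vj X 1 t) (vj X 2 t) (vj X 3 t) (vj X 4 t)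
    (vj Y 0 t) (vj Y 1 t) (vj Y 2 t) (vj Y 3 t) (vj Y 4 t) HD) as KA.
  cbv zeta in KA. rewrite KA. ring.
Qed.

Lemma vj_const Z z0 j t : (forall u s, inI lo hi s -> (s < a \/ b < s) -> Z u s = z0 s) ->
  inI lo hi t -> (t < a \/ b < t) -> vj Z j t = 0.
Proof.
  intros Hs Ht Hab'. unfold vj, Xj.
  assert (E : forall z, Derive_n (Z z) j t = Derive_n z0 j t).
  { intros z. apply Derive_n_ext_loc.
    destruct (inI_open _ _ _ Ht) as [e He].
    assert (Hm : 0 < Rmin e (Rmax (a - t) (t - b))).
    { apply Rmin_pos; [apply cond_pos|]. destruct Hab' as [H1|H1];
      [apply Rlt_le_trans with (a - t); [lra| apply Rmax_l] | apply Rlt_le_trans with (t - b); [lra| apply Rmax_r]]. }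
    exists (mkposreal _ Hm). intros s Hs'. unfold ball in Hs'; simpl in Hs'; unfold AbsRing_ball, abs, minus, plus, opp in Hs'; simpl in Hs'.
    apply Hs.
    - apply He. eapply Rlt_le_trans; [exact Hs'| apply Rmin_l].
    - pose proof (Rmin_r e (Rmax (a - t) (t - b))) as R1. apply Rabs_lt_between in Hs'.
      destruct Hab' as [H1|H1].
      + left. destruct (Rle_dec (a - t) (t - b)); [lra|].
        rewrite Rmax_left in R1, Hs' by lra. lra.
      + right. destruct (Rle_dec (a - t) (t - b)); [rewrite Rmax_right in R1, Hs' by lra; lra|].
        lra. }
  rewrite (Derive_ext _ (fun _ => Derive_n z0 j t) 0 E). apply Derive_const.
Qed.

Lemma vj_zero_a Z z0 j : Sm lo hi Z -> (forall u s, inI lo hi s -> (s < a \/ b < s) -> Z u s = z0 s) ->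
  vj Z j a = 0.
Proof.
  intros HZ Hs. destruct (inI_open _ _ _ Ha) as [e He].
  apply (zero_left _ a e). apply (cR_der _ _ _ (v_der Z j a HZ Ha)). apply cond_pos.
  intros s Hs'. apply (vj_const Z z0); auto. apply He. rewrite Rabs_left by lra. lra. lra.
Qed.

Lemma vj_zero_b Z z0 j : Sm lo hi Z -> (forall u s, inI lo hi s -> (s < a \/ b < s) -> Z u s = z0 s) ->
  vj Z j b = 0.
Proof.
  intros HZ Hs. destruct (inI_open _ _ _ Hb) as [e He].
  apply (zero_right _ b e). apply (cR_der _ _ _ (v_der Z j b HZ Hb)). apply cond_pos.
  intros s Hs'. apply (vj_const Z z0); auto. apply He. rewrite Rabs_right by lra. lra. lra.
Qed.

Lemma HsX : forall u s, inI lo hi s -> (s < a \/ b < s) -> X u s = x s.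
Proof. intros u s H1 H2. apply (Hsupp u s H1 H2). Qed.
Lemma HsY : forall u s, inI lo hi s -> (s < a \/ b < s) -> Y u s = y s.
Proof. intros u s H1 H2. apply (Hsupp u s H1 H2). Qed.

Lemma Gt_a : Gt a = 0.
Proof.
  unfold Gt. rewrite !(vj_zero_a X x _ HX HsX), !(vj_zero_a Y y _ HY HsY). unfold Gf. ring.
Qed.
Lemma Gt_b : Gt b = 0.
Proof.
  unfold Gt. rewrite !(vj_zero_b X x _ HX HsX), !(vj_zero_b Y y _ HY HsY). unfold Gf. ring.
Qed.

Ltac ct t Ht := repeat first
  [ apply (cR_der _ _ _ (dx lo hi x Hsx _ t Ht))
  | apply (cR_der _ _ _ (dy lo hi y Hsy _ t Ht))
  | apply (cR_der _ _ _ (v_der X _ t HX Ht))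
  | apply (cR_der _ _ _ (v_der Y _ t HY Ht))
  | apply cR_minus | apply cR_plus | apply cR_mult | apply cR_pow | apply cR_const ].

Lemma Ef_cont t : inI lo hi t -> continuous Ef t.
Proof.
  intros Ht. apply continuous_ext_loc with (fun s => K2 x y s + K0 x y s ^ 2).
  - eapply filter_imp; [| apply (inI_locally _ _ _ Ht)]. intros s Hs. symmetry. apply Ef_eq; auto.
  - unfold K2, K0. apply poly_cont1; apply (cR_der _ _ _ (dx lo hi x Hsx _ t Ht)) || apply (cR_der _ _ _ (dy lo hi y Hsy _ t Ht)).
Qed.

Definition cint t := 2/3 * Ef t * (Derive_n x 1 t * vj Y 0 t - Derive_n y 1 t * vj X 0 t).

Lemma cint_cont t : inI lo hi t -> continuous cint t.
Proof.
  intros Ht. unfold cint.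
  apply cR_mult; [apply cR_mult; [apply cR_const | apply Ef_cont; auto] |].
  apply poly_cont2.
  - exact (cR_der _ _ _ (dx lo hi x Hsx _ t Ht)).
  - exact (cR_der _ _ _ (v_der Y _ t HY Ht)).
  - exact (cR_der _ _ _ (dy lo hi y Hsy _ t Ht)).
  - exact (cR_der _ _ _ (v_der X _ t HX Ht)).
Qed.

Lemma DL_cont2 t : inI lo hi t -> continuity_2d_pt (fun u v => Derive (fun z => L z v) u) 0 t.
Proof.
  intros Ht. apply continuity_2d_pt_ext_loc with (du PL).
  - destruct (Om_open 0 t (Om0 t Ht)) as [e He]. exists e. intros u v Hu Hv. unfold du.
    apply Derive_ext_loc.
    pose proof (locally_2d_1d_const_y _ _ _ (L_PL_loc u v (He u v Hu Hv))) as K.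
    eapply filter_imp; [| exact K]. intros z Hz; simpl in Hz; symmetry; exact Hz.
  - exact (proj2 (proj2 (K_PL 0 t (Om0 t Ht)))).
Qed.

Lemma GFV_main : is_derive (fun u => total_ea_curv (X u) (Y u) a b) 0 (RInt cint a b).
Proof.
  destruct compact as [d Hd].
  assert (HIab : forall t, a <= t <= b -> inI lo hi t) by (intros; apply (inI_between lo hi a b); auto).
  assert (Hmin : Rmin a b = a) by (apply Rmin_left; exact Hab).
  assert (Hmax : Rmax a b = b) by (apply Rmax_right; exact Hab).
  assert (HP : is_derive (fun u => RInt (fun t => L u t) a b) 0 (RInt (fun t => Derive (fun u => L u t) 0) a b)).
  { apply (is_derive_RInt_param L a b 0).
    - exists d. intros u0 Hu0 t Ht. rewrite Hmin, Hmax in Ht. ballR Hu0. rewrite Ropp_0, Rplus_0_r in Hu0.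
      assert (Hom : Om u0 t) by (apply Hd; auto).
      apply ex_derive_ext_loc with (fun z => PL z t).
      + pose proof (locally_2d_1d_const_y _ _ _ (L_PL_loc u0 t Hom)) as K.
        eapply filter_imp; [| exact K]. intros z Hz; simpl in Hz; symmetry; exact Hz.
      + exact (proj1 (proj2 (K_PL u0 t Hom))).
    - intros t Ht. rewrite Hmin, Hmax in Ht. apply DL_cont2. auto.
    - exists d. intros u Hu. ballR Hu. rewrite Ropp_0, Rplus_0_r in Hu.
      apply (@ex_RInt_continuous R_CompleteNormedModule). intros t Ht. rewrite Hmin, Hmax in Ht.
      assert (Hom : Om u t) by (apply Hd; auto).
      apply continuous_ext_loc with (fun s => PL u s).
      + pose proof (locally_2d_1d_const_x _ _ _ (L_PL_loc u t Hom)) as K.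
        eapply filter_imp; [| exact K]. intros z Hz; simpl in Hz; symmetry; exact Hz.
      + apply cont2d_1d. exact (proj1 (K_PL u t Hom)). }
  assert (HG : is_RInt (fun t => Derive (fun u => L u t) 0 - cint t) a b (minus (Gt b) (Gt a))).
  { apply (is_RInt_derive Gt).
    - intros t Ht. rewrite Hmin, Hmax in Ht. exact (Gt_der t (HIab t Ht)).
    - intros t Ht. rewrite Hmin, Hmax in Ht. apply cR_minus.
      + apply (cont2d_1d (fun u v => Derive (fun z => L z v) u) 0 t). apply DL_cont2; auto.
      + apply cint_cont; auto. }
  rewrite Gt_a, Gt_b in HG.
  assert (Hc : ex_RInt cint a b).
  { apply (@ex_RInt_continuous R_CompleteNormedModule). intros t Ht. rewrite Hmin, Hmax in Ht. apply cint_cont; auto. }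
  assert (E : RInt (fun t => Derive (fun u => L u t) 0) a b = RInt cint a b).
  { pose proof (is_RInt_plus _ _ a b _ _ HG (RInt_correct _ _ _ Hc)) as HS.
    assert (HS' : is_RInt (fun t => Derive (fun u => L u t) 0) a b (plus (minus 0 0) (RInt cint a b))).
    { eapply is_RInt_ext; [| exact HS]. intros t _. unfold plus; simpl. ring. }
    rewrite minus_eq_zero, plus_zero_l in HS'. exact (is_RInt_unique _ _ _ _ HS'). }
  rewrite E in HP. exact HP.
Qed.

End GFV.

Fixpoint peval (p : list R) (y : R) : R :=
  match p with nil => 0 | c :: q => c + y * peval q y end.
Fixpoint padd (p q : list R) : list R :=
  match p, q with
  | nil, _ => q
  | _, nil => p
  | a :: p', b :: q' => (a + b) :: padd p' q'
  end.
Definition pneg (p : list R) := map Ropp p.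
Fixpoint pder (p : list R) : list R :=
  match p with nil => nil | c :: q => padd q (0 :: pder q) end.
Definition pnext (p : list R) := 0 :: 0 :: padd p (pneg (pder p)).

Lemma peval_padd p q y : peval (padd p q) y = peval p y + peval q y.
Proof.
  revert q. induction p as [|a p IH]; intros q; simpl.
  - ring.
  - destruct q as [|b q]; simpl. ring. rewrite IH. ring.
Qed.
Lemma peval_pneg p y : peval (pneg p) y = - peval p y.
Proof. induction p as [|a p IH]; simpl. ring. rewrite IH. ring. Qed.

Lemma peval_der p y : is_derive (peval p) y (peval (pder p) y).
Proof.
  induction p as [|c q IH]; simpl.
  - apply (is_derive_ext (fun _ => 0)). intros; reflexivity. auto_derive; [exact I| reflexivity].
  - rewrite peval_padd. simpl.
    assert (E : Derive (fun x => peval q x) y = peval (pder q) y) by (apply is_derive_unique; exact IH).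
    auto_derive. eexists; exact IH.
    rewrite E. ring.
Qed.

Lemma peval_cont p y : continuous (peval p) y.
Proof. apply (@ex_derive_continuous R_AbsRing R_NormedModule). eexists. apply peval_der. Qed.

Definition Fp (p : list R) (s : R) : R :=
  if Rlt_dec 0 s then peval p (/ s) * exp (- / s) else 0.

Fixpoint psum (p : list R) : R := match p with nil => 0 | c :: q => Rabs c + psum q end.

Lemma psum_ge0 p : 0 <= psum p.
Proof. induction p; simpl. lra. pose proof (Rabs_pos a). lra. Qed.

Lemma peval_bound p y : 1 <= y -> Rabs (peval p y) <= psum p * y ^ length p.
Proof.
  intros Hy. induction p as [|c q IH]; simpl.
  - rewrite Rabs_R0. lra.
  - eapply Rle_trans; [apply Rabs_triang|]. rewrite Rabs_mult, (Rabs_right y) by lra.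
    assert (H1 : 1 <= y ^ length q) by (apply pow_R1_Rle; lra).
    assert (H2 : Rabs c <= Rabs c * (y * y ^ length q)).
    { rewrite <- (Rmult_1_r (Rabs c)) at 1. apply Rmult_le_compat_l. apply Rabs_pos.
      nra. }
    assert (H3 : y * Rabs (peval q y) <= y * (psum q * y ^ length q)) by (apply Rmult_le_compat_l; lra).
    nra.
Qed.

Lemma exp_nat k z : exp (INR k * z) = exp z ^ k.
Proof.
  induction k.
  - simpl. rewrite Rmult_0_l. apply exp_0.
  - rewrite S_INR, Rmult_plus_distr_r, Rmult_1_l, exp_plus, IHk. simpl. ring.
Qed.

Lemma exp_pow_bound n y : 0 < y -> y ^ S n <= (INR n + 1) ^ S n * exp y.
Proof.
  intros Hy.
  assert (Hn : 0 < INR n + 1) by (pose proof (pos_INR n); lra).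
  assert (E : exp y = exp (y / (INR n + 1)) ^ (S n)).
  { rewrite <- exp_nat. f_equal. rewrite S_INR. field. lra. }
  rewrite E.
  assert (E2 : y ^ S n = (INR n + 1) ^ S n * (y / (INR n + 1)) ^ S n).
  { rewrite <- Rpow_mult_distr. f_equal. field. lra. }
  rewrite E2. apply Rmult_le_compat_l. apply pow_le; lra.
  apply pow_incr. split. apply Rlt_le, Rdiv_lt_0_compat; lra.
  pose proof (exp_ineq1_le (y / (INR n + 1))). lra.
Qed.

Lemma ball_R' (c e s : R) : ball c e s <-> Rabs (s - c) < e.
Proof. unfold ball; simpl; unfold AbsRing_ball, abs, minus, plus, opp; simpl. tauto. Qed.

Lemma Fp_der_pos p s : 0 < s -> is_derive (Fp p) s (Fp (pnext p) s).
Proof.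
  intros Hs.
  apply is_derive_ext_loc with (fun r => peval p (/ r) * exp (- / r)).
  - exists (mkposreal s Hs). intros r Hr. unfold ball in Hr; simpl in Hr; unfold AbsRing_ball, abs, minus, plus, opp in Hr; simpl in Hr.
    apply Rabs_lt_between in Hr. unfold Fp. destruct (Rlt_dec 0 r); [reflexivity| lra].
  - unfold Fp. destruct (Rlt_dec 0 s) as [_|n]; [|lra].
    assert (E : Derive (fun x => peval p x) (/ s) = peval (pder p) (/ s))
      by (apply is_derive_unique; apply peval_der).
    auto_derive.
    + split; [eexists; apply peval_der|]. split; [lra|]. split; [lra| exact I].
    + rewrite E. unfold pnext. simpl. rewrite peval_padd, peval_pneg. field. lra.
Qed.

Lemma Fp_der_neg p s : s < 0 -> is_derive (Fp p) s (Fp (pnext p) s).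
Proof.
  intros Hs.
  assert (Hs' : 0 < - s) by lra.
  apply is_derive_ext_loc with (fun _ => 0).
  - exists (mkposreal _ Hs'). intros r Hr. unfold ball in Hr; simpl in Hr; unfold AbsRing_ball, abs, minus, plus, opp in Hr; simpl in Hr.
    apply Rabs_lt_between in Hr. unfold Fp. destruct (Rlt_dec 0 r); [lra| reflexivity].
  - unfold Fp. destruct (Rlt_dec 0 s) as [H|_]; [lra|].
    auto_derive; [exact I| reflexivity].
Qed.

Lemma Fp_der_0 p : is_derive (Fp p) 0 (Fp (pnext p) 0).
Proof.
  unfold Fp at 2. destruct (Rlt_dec 0 0) as [H|_]; [lra|].
  apply is_derive_Reals. intros eps Heps.
  set (m := length p). set (C := (INR (S m) + 1) ^ S (S m)).
  assert (HC : 0 < C) by (unfold C; apply pow_lt; pose proof (pos_INR (S m)); lra).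
  set (Sp := psum p).
  assert (HS : 0 <= Sp) by apply psum_ge0.
  assert (Hd : 0 < Rmin 1 (eps / (Sp * C + 1))).
  { apply Rmin_pos; [lra|]. apply Rdiv_lt_0_compat; [lra|]. nra. }
  exists (mkposreal _ Hd). simpl. intros h Hh0 Hh.
  rewrite Rplus_0_l. unfold Fp. destruct (Rlt_dec 0 0) as [H|_]; [lra|].
  destruct (Rlt_dec 0 h) as [Hp|Hn].
  - rewrite Rabs_right in Hh by lra.
    assert (Hh1 : h < 1) by (eapply Rlt_le_trans; [exact Hh| apply Rmin_l]).
    assert (Hh2 : h < eps / (Sp * C + 1)) by (eapply Rlt_le_trans; [exact Hh| apply Rmin_r]).
    set (y := / h).
    assert (Hy : 1 < y) by (unfold y; rewrite <- Rinv_1; apply Rinv_lt_contravar; lra).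
    assert (Hb := peval_bound p y (Rlt_le _ _ Hy)). fold m Sp in Hb.
    assert (Hexp := exp_pow_bound (S m) y ltac:(lra)). fold C in Hexp.
    assert (He : 0 < exp y) by apply exp_pos.
    replace ((peval p y * exp (- y) - 0) / h - 0) with (peval p y * y / exp y).
    2: { unfold y. rewrite exp_Ropp. field. split; [apply Rgt_not_eq, exp_pos| lra]. }
    rewrite Rabs_div by lra. rewrite Rabs_mult, (Rabs_right y) by lra.
    rewrite (Rabs_right (exp y)) by lra.
    apply Rle_lt_trans with (Sp * C * h).
    + apply Rle_trans with (Sp * y ^ m * y / exp y).
      * unfold Rdiv. apply Rmult_le_compat_r. left; apply Rinv_0_lt_compat; lra.
        apply Rmult_le_compat_r; lra.
      * assert (Hpow : y ^ S (S m) = y ^ m * y * y) by (simpl; ring).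
        rewrite Hpow in Hexp.
        apply Rle_trans with (Sp * (C * exp y / y) / exp y).
        { unfold Rdiv. apply Rmult_le_compat_r. left; apply Rinv_0_lt_compat; lra.
          rewrite Rmult_assoc. apply Rmult_le_compat_l. exact HS.
          apply (Rmult_le_reg_r y); [lra|]. field_simplify; [|lra]. lra. }
        right. unfold y. field. repeat split; try lra; try (apply Rgt_not_eq, exp_pos).
    + assert (Sp * C * h <= Sp * C * h) by lra.
      apply Rle_lt_trans with ((Sp * C + 1) * h). nra.
      assert (HK : 0 < Sp * C + 1) by nra.
      apply (Rmult_lt_compat_l (Sp*C+1)) in Hh2; [|exact HK].
      replace ((Sp*C+1)*(eps/(Sp*C+1))) with eps in Hh2 by (field; lra). exact Hh2.
  - replace ((0 - 0) / h - 0) with 0 by (field; exact Hh0). rewrite Rabs_R0. exact Heps.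
Qed.

Lemma Fp_der p s : is_derive (Fp p) s (Fp (pnext p) s).
Proof.
  destruct (total_order_T s 0) as [[H|H]|H].
  - apply Fp_der_neg; auto.
  - subst. apply Fp_der_0.
  - apply Fp_der_pos; auto.
Qed.

Fixpoint SMn (n : nat) (f : R -> R) : Prop :=
  match n with O => True | S m => (forall s, ex_derive f s) /\ SMn m (Derive f) end.

Lemma SMn_ext n : forall f g, (forall s, f s = g s) -> SMn n f -> SMn n g.
Proof.
  induction n; intros f g E H; simpl; auto. destruct H as [H1 H2]. split.
  - intros s. apply ex_derive_ext with f; auto.
  - apply IHn with (Derive f); auto. intros s. apply Derive_ext. auto.
Qed.

Lemma SMn_le n : forall f, SMn (S n) f -> SMn n f.
Proof.
  induction n; intros f H; simpl; auto. destruct H as [H1 H2]. split; auto.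
Qed.

Lemma SMn_plus n : forall f g, SMn n f -> SMn n g -> SMn n (fun s => f s + g s).
Proof.
  induction n; intros f g Hf Hg; simpl; auto. destruct Hf as [F1 F2], Hg as [G1 G2]. split.
  - intros s. auto_derive. split; [exact (F1 _)| split; [exact (G1 _)| exact I]].
  - apply SMn_ext with (fun s => Derive f s + Derive g s).
    + intros s. symmetry. apply (Derive_plus f g); auto.
    + apply IHn; auto.
Qed.

Lemma SMn_mult n : forall f g, SMn n f -> SMn n g -> SMn n (fun s => f s * g s).
Proof.
  induction n; intros f g Hf Hg; simpl; auto.
  assert (Hf' := SMn_le _ _ Hf). assert (Hg' := SMn_le _ _ Hg).
  destruct Hf as [F1 F2], Hg as [G1 G2]. split.
  - intros s. auto_derive. split; [exact (F1 _)| split; [exact (G1 _)| exact I]].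
  - apply SMn_ext with (fun s => Derive f s * g s + f s * Derive g s).
    + intros s. symmetry. apply Derive_mult; auto.
    + apply SMn_plus; apply IHn; auto.
Qed.

Lemma SMn_affine n : forall f (al be : R), SMn n f -> SMn n (fun t => f (al * t + be)).
Proof.
  induction n; intros f al be Hf; simpl; auto. destruct Hf as [F1 F2]. split.
  - intros s. auto_derive. exact (F1 _).
  - apply SMn_ext with (fun t => al * Derive f (al * t + be)).
    + intros s. symmetry. apply is_derive_unique.
      assert (E : Derive (fun x => f x) (al * s + be) = Derive f (al * s + be)) by reflexivity.
      auto_derive. exact (F1 _). rewrite E. ring.
    + apply (SMn_mult n (fun _ => al) (fun t => Derive f (al * t + be))).
      * clear. induction n; simpl; auto. split.
        -- intros s. auto_derive. exact I.
        -- apply SMn_ext with (fun _ => 0). intros s. symmetry. apply Derive_const.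
           clear IHn. induction n; simpl; auto. split. intros; auto_derive; exact I.
           apply SMn_ext with (fun _ => 0); auto. intros s. symmetry. apply Derive_const.
      * apply IHn. exact F2.
Qed.

Lemma SMn_Fp n : forall p, SMn n (Fp p).
Proof.
  induction n; intros p; simpl; auto. split.
  - intros s. eexists. apply Fp_der.
  - apply SMn_ext with (Fp (pnext p)).
    + intros s. symmetry. apply is_derive_unique. apply Fp_der.
    + apply IHn.
Qed.

Definition bump (c d : R) (t : R) := Fp (1 :: nil) (1 * t + - c) * Fp (1 :: nil) (-1 * t + d).

Lemma SMn_bump c d n : SMn n (bump c d).
Proof.
  unfold bump. apply (SMn_mult n (fun t => Fp (1 :: nil) (1 * t + - c)) (fun t => Fp (1 :: nil) (-1 * t + d)));
  apply (SMn_affine n (Fp (1 :: nil))); apply SMn_Fp.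
Qed.

Lemma SMn_ex_derive_n n : forall f, SMn (S n) f -> forall s, ex_derive (Derive_n f n) s.
Proof.
  induction n; intros f H s.
  - simpl in H. destruct H as [H _]. apply ex_derive_ext with f; auto.
  - assert (E : forall t, Derive_n (Derive f) n t = Derive_n f (S n) t).
    { intros t. replace (S n) with (n + 1)%nat by lia. rewrite <- (Derive_n_comp f n 1). apply Derive_n_ext. intros; reflexivity. }
    apply ex_derive_ext with (Derive_n (Derive f) n).
    + exact E.
    + apply IHn. destruct H as [_ H]. exact H.
Qed.

Lemma bump_zero c d t : ~ (c < t < d) -> bump c d t = 0.
Proof.
  intros H. unfold bump, Fp.
  destruct (Rlt_dec 0 (1 * t + - c)); destruct (Rlt_dec 0 (-1 * t + d)); try ring.
  exfalso. apply H. lra.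
Qed.

Lemma bump_pos c d t : c < t < d -> 0 < bump c d t.
Proof.
  intros H. unfold bump, Fp.
  destruct (Rlt_dec 0 (1 * t + - c)); [|lra]. destruct (Rlt_dec 0 (-1 * t + d)); [|lra].
  simpl. rewrite !Rmult_0_r, !Rplus_0_r, !Rmult_1_l. apply Rmult_lt_0_compat; apply exp_pos.
Qed.

Lemma bump_smooth c d : forall n s, ex_derive_n (bump c d) n s.
Proof.
  intros n s. destruct n; simpl; auto. apply SMn_ex_derive_n. apply SMn_bump.
Qed.

Lemma Derive_n_D (f : R -> R) n t : Derive_n (Derive f) n t = Derive_n f (S n) t.
Proof. replace (S n) with (n + 1)%nat by lia. rewrite <- (Derive_n_comp f n 1). apply Derive_n_ext. intros; reflexivity. Qed.

Lemma smooth_D lo hi f : smooth_on lo hi f -> smooth_on lo hi (Derive f).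
Proof.
  intros H n t Ht. destruct n; simpl; auto.
  apply ex_derive_ext with (Derive_n f (S n)).
  - intros s. symmetry. apply Derive_n_D.
  - exact (H (S (S n)) t Ht).
Qed.

Lemma Derive_n_zero m s : Derive_n (fun _ => 0) m s = 0.
Proof.
  revert s. induction m; intros s; simpl; auto.
  rewrite (Derive_ext _ (fun _ => 0) s IHm). apply Derive_const.
Qed.

Lemma smooth_zero lo hi : smooth_on lo hi (fun _ => 0).
Proof.
  intros n t Ht. destruct n; simpl; auto.
  apply ex_derive_ext with (fun _ => 0).
  - intros s. symmetry. apply Derive_n_zero.
  - apply ex_derive_const.
Qed.

Lemma C2k_ext lo hi k : forall f g, (forall u t, inI lo hi t -> f u t = g u t) -> C2k k lo hi f -> C2k k lo hi g.
Proof.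
  induction k; intros f g E H.
  - intros u t Ht. simpl in H. apply continuous_ext_loc with (fun p : R * R => f (fst p) (snd p)).
    + apply (proj1 (locally_2d_locally (fun u' t' => f u' t' = g u' t') u t)).
      destruct (inI_open _ _ _ Ht) as [e He]. exists e. intros u' t' _ Ht'. apply E. apply He; auto.
    + apply H; auto.
  - destruct H as (H1 & H2 & H3 & H4). split; [|split; [|split]].
    + intros u t Ht. destruct (H1 u t Ht) as [A B]. split.
      * apply ex_derive_ext_loc with (fun s => f u s); auto.
        eapply filter_imp; [| apply (inI_locally _ _ _ Ht)]. intros s Hs. apply E; auto.
      * apply ex_derive_ext with (fun v => f v t); auto.
    + apply (IHk (fun u t => Derive (fun s => f u s) t)); auto.
      intros u t Ht. apply Derive_ext_loc.
      eapply filter_imp; [| apply (inI_locally _ _ _ Ht)]. intros s Hs. apply E; auto.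
    + apply (IHk (fun u t => Derive (fun v => f v t) u)); auto.
      intros u t Ht. apply Derive_ext. intros v. apply E; auto.
    + apply (IHk f); auto.
Qed.

Lemma smooth_cont lo hi f t : smooth_on lo hi f -> inI lo hi t -> continuity_pt f t.
Proof.
  intros H Ht. apply continuity_pt_filterlim.
  apply (@ex_derive_continuous R_AbsRing R_NormedModule f t). exact (H 1%nat t Ht).
Qed.

Lemma C2k_lin lo hi k : forall f g, smooth_on lo hi f -> smooth_on lo hi g ->
  C2k k lo hi (fun u t => f t + u * g t).
Proof.
  induction k; intros f g Hf Hg.
  - intros u t Ht. apply (proj1 (continuity_2d_pt_filterlim (fun u t => f t + u * g t) u t)).
    apply continuity_2d_pt_plus.
    + apply (continuity_1d_2d_pt_comp f (fun _ t => t)). apply smooth_cont with lo hi; auto.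
      apply continuity_2d_pt_id2.
    + apply continuity_2d_pt_mult. apply continuity_2d_pt_id1.
      apply (continuity_1d_2d_pt_comp g (fun _ t => t)). apply smooth_cont with lo hi; auto.
      apply continuity_2d_pt_id2.
  - split; [|split; [|split]].
    + intros u t Ht. split.
      * assert (A : ex_derive f t) by exact (Hf 1%nat t Ht).
        assert (B : ex_derive g t) by exact (Hg 1%nat t Ht).
        auto_derive. split; [exact A| split; [exact B| exact I]].
      * auto_derive. exact I.
    + apply (C2k_ext lo hi k (fun u t => Derive f t + u * Derive g t)).
      * intros u t Ht.
        assert (A : ex_derive f t) by exact (Hf 1%nat t Ht).
        assert (B : ex_derive g t) by exact (Hg 1%nat t Ht).
        symmetry. apply is_derive_unique.
        assert (E1 : Derive (fun x => f x) t = Derive f t) by reflexivity.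
        assert (E2 : Derive (fun x => g x) t = Derive g t) by reflexivity.
        auto_derive. split; [exact A| split; [exact B| exact I]]. rewrite E1, E2. ring.
      * apply IHk; apply smooth_D; auto.
    + apply (C2k_ext lo hi k (fun u t => g t + u * 0)).
      * intros u t Ht. symmetry. apply is_derive_unique. auto_derive. exact I. ring.
      * apply IHk; auto. apply smooth_zero.
    + apply IHk; auto.
Qed.

Lemma Sm_lin lo hi f g : smooth_on lo hi f -> smooth_on lo hi g -> Sm lo hi (fun u t => f t + u * g t).
Proof. intros Hf Hg k. apply C2k_lin; auto. Qed.

Lemma smooth_bump lo hi c d : smooth_on lo hi (bump c d).
Proof. intros n t _. apply bump_smooth. Qed.

Lemma bump_cont c d t : continuous (bump c d) t.
Proof.
  apply (@ex_derive_continuous R_AbsRing R_NormedModule). exact (bump_smooth c d 1%nat t).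
Qed.

Lemma fund_pos lo hi (g : R -> R) t0 :
  (forall t, inI lo hi t -> continuous g t) ->
  (forall c d, inI lo hi c -> inI lo hi d -> c < d -> RInt (fun t => g t * bump c d t) c d = 0) ->
  inI lo hi t0 -> 0 < g t0 -> False.
Proof.
  intros Hc Hint Ht0 Hp.
  destruct (proj1 (filterlim_locally g (g t0)) (Hc t0 Ht0) (mkposreal _ Hp)) as [dl Hdl].
  destruct (inI_open _ _ _ Ht0) as [e He].
  assert (Hm : 0 < Rmin dl e) by (apply Rmin_pos; apply cond_pos).
  set (c := t0 - Rmin dl e / 2). set (d := t0 + Rmin dl e / 2).
  assert (Hin : forall t, c <= t <= d -> inI lo hi t /\ 0 < g t).
  { intros t Ht. assert (Hl : Rabs (t - t0) < Rmin dl e).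
    { unfold c, d in Ht. apply Rabs_def1; lra. }
    split.
    - apply He. eapply Rlt_le_trans; [exact Hl| apply Rmin_r].
    - assert (K : ball t0 dl t).
      { unfold ball; simpl; unfold AbsRing_ball, abs, minus, plus, opp; simpl.
        eapply Rlt_le_trans; [exact Hl| apply Rmin_l]. }
      specialize (Hdl t K). unfold ball in Hdl; simpl in Hdl; unfold AbsRing_ball, abs, minus, plus, opp in Hdl; simpl in Hdl.
      apply Rabs_lt_between in Hdl. lra. }
  assert (Hcd : c < d) by (unfold c, d; lra).
  assert (Hcc : inI lo hi c) by (apply Hin; lra).
  assert (Hdd : inI lo hi d) by (apply Hin; lra).
  specialize (Hint c d Hcc Hdd Hcd).
  assert (Hpos : 0 < RInt (fun t => g t * bump c d t) c d).
  { apply RInt_gt_0; auto.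
    - intros t Ht. apply Rmult_lt_0_compat. apply Hin; lra. apply bump_pos; lra.
    - intros t Ht. apply (continuous_mult g (bump c d) t). apply Hc. apply Hin; lra. apply bump_cont. }
  lra.
Qed.

Lemma fund lo hi (g : R -> R) t0 :
  (forall t, inI lo hi t -> continuous g t) ->
  (forall c d, inI lo hi c -> inI lo hi d -> c < d -> RInt (fun t => g t * bump c d t) c d = 0) ->
  inI lo hi t0 -> g t0 = 0.
Proof.
  intros Hc Hint Ht0.
  destruct (total_order_T (g t0) 0) as [[H|H]|H]; auto.
  - exfalso. apply (fund_pos lo hi (fun t => - g t) t0); [| | exact Ht0 | lra].
    + intros t Ht. apply (continuous_opp g t). auto.
    + intros c d Hc' Hd' Hcd.
      assert (Hex : ex_RInt (fun t => g t * bump c d t) c d).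
      { apply (@ex_RInt_continuous R_CompleteNormedModule). intros t Ht.
        rewrite Rmin_left, Rmax_right in Ht by lra.
        apply (continuous_mult g (bump c d) t). apply Hc. apply (inI_between lo hi c d); auto. apply bump_cont. }
      destruct Hex as [I0 HI0].
      assert (HI1 : is_RInt (fun t => - g t * bump c d t) c d (opp I0)).
      { eapply is_RInt_ext; [| apply is_RInt_opp; exact HI0]. intros t _. unfold opp; simpl. ring. }
      rewrite (is_RInt_unique _ _ _ _ HI1). specialize (Hint c d Hc' Hd' Hcd).
      rewrite (is_RInt_unique _ _ _ _ HI0) in Hint. rewrite Hint. unfold opp; simpl. ring.
  - exfalso. apply (fund_pos lo hi g t0); auto.
Qed.

Lemma lin_der (f g : R -> R) s f' g' A B : is_derive f s f' -> is_derive g s g' ->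
  is_derive (fun r => A * f r + B * g r) s (A * f' + B * g').
Proof.
  intros Hf Hg.
  assert (E1 : Derive (fun r => f r) s = f') by (apply is_derive_unique; exact Hf).
  assert (E2 : Derive (fun r => g r) s = g') by (apply is_derive_unique; exact Hg).
  auto_derive. split; [eexists; exact Hf| split; [eexists; exact Hg| exact I]].
  rewrite E1, E2. ring.
Qed.

Section Final.
Variables (lo hi : Rbar) (x y : R -> R).
Hypotheses (Hsx : smooth_on lo hi x) (Hsy : smooth_on lo hi y)
  (Hdet : forall t, inI lo hi t -> ea_det x y t = 1).

Lemma Ef_zero_if A B : (forall t, inI lo hi t -> ea_curv x y t = A * Derive x t + B * Derive y t) ->
  forall t, inI lo hi t -> Ef x y t = 0.
Proof.
  intros HAB t Ht.
  assert (D1 : forall s, inI lo hi s -> Derive (ea_curv x y) s = A * Derive_n x 2 s + B * Derive_n y 2 s).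
  { intros s Hs. apply is_derive_unique.
    apply is_derive_ext_loc with (fun r => A * Derive_n x 1 r + B * Derive_n y 1 r).
    - eapply filter_imp; [| apply (inI_locally _ _ _ Hs)]. intros r Hr. symmetry. exact (HAB r Hr).
    - apply lin_der; [apply (dx lo hi x Hsx 1 s Hs) | apply (dy lo hi y Hsy 1 s Hs)]. }
  assert (D2 : Derive_n (ea_curv x y) 2 t = A * Derive_n x 3 t + B * Derive_n y 3 t).
  { change (Derive_n (ea_curv x y) 2 t) with (Derive (Derive (ea_curv x y)) t).
    apply is_derive_unique.
    apply is_derive_ext_loc with (fun r => A * Derive_n x 2 r + B * Derive_n y 2 r).
    - eapply filter_imp; [| apply (inI_locally _ _ _ Ht)]. intros r Hr. symmetry. exact (D1 r Hr).
    - apply lin_der; [apply (dx lo hi x Hsx 2 t Ht) | apply (dy lo hi y Hsy 2 t Ht)]. }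
  assert (HK : K0 x y t = A * Derive_n x 1 t + B * Derive_n y 1 t).
  { rewrite <- (curv_K0 lo hi x y Hsx Hsy Hdet t Ht). exact (HAB t Ht). }
  unfold Ef. rewrite D2, (x3_eq lo hi x y Hsx Hsy Hdet t Ht), (y3_eq lo hi x y Hsx Hsy Hdet t Ht).
  rewrite (curv_K0 lo hi x y Hsx Hsy Hdet t Ht).
  replace (K0 x y t ^ 2) with (K0 x y t * (A * Derive_n x 1 t + B * Derive_n y 1 t)) by (rewrite <- HK; ring).
  ring.
Qed.

Lemma if_dir A B : (forall t, inI lo hi t -> ea_curv x y t = A * Derive x t + B * Derive y t) ->
  ea_critical lo hi x y.
Proof.
  intros HAB X Y a b HX HY H0 Ha Hb Hab Hsupp.
  pose proof (GFV_main lo hi x y X Y a b Hsx Hsy Hdet HX HY H0 Ha Hb Hab Hsupp) as HG.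
  assert (E : RInt (cint x y X Y) a b = 0).
  { assert (HI : is_RInt (cint x y X Y) a b (scal (b - a) 0)).
    { eapply is_RInt_ext; [| exact (@is_RInt_const R_NormedModule a b 0)]. intros t Ht.
      rewrite Rmin_left, Rmax_right in Ht by lra.
      change (@eq R 0 (cint x y X Y t)). unfold cint. rewrite (Ef_zero_if A B HAB t) by (apply (inI_between lo hi a b); auto; lra). ring. }
    rewrite (is_RInt_unique _ _ _ _ HI). unfold scal; simpl; unfold mult; simpl. ring. }
  rewrite E in HG. exact HG.
Qed.

Lemma vj_lin f g t : vj (fun u t => f t + u * g t) 0 t = g t.
Proof.
  unfold vj, Xj. simpl. apply is_derive_unique. auto_derive. exact I. ring.
Qed.

Lemma crit_y (Hcrit : ea_critical lo hi x y) t0 : inI lo hi t0 -> Ef x y t0 * Derive_n y 1 t0 = 0.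
Proof.
  intros Ht0. apply (fund lo hi (fun t => Ef x y t * Derive_n y 1 t)); auto.
  - intros t Ht. apply (continuous_mult (Ef x y) (Derive_n y 1) t).
    apply (Ef_cont lo hi x y Hsx Hsy Hdet t Ht). apply cR_der with (Derive_n y 2 t). apply (dy lo hi y Hsy 1 t Ht).
  - intros c d Hc Hd Hcd.
    set (X := fun u t => x t + u * bump c d t). set (Y := fun u t => y t + u * (fun _ : R => 0) t).
    assert (HX : Sm lo hi X) by (apply Sm_lin; [exact Hsx| apply smooth_bump]).
    assert (HY : Sm lo hi Y) by (apply Sm_lin; [exact Hsy| apply smooth_zero]).
    assert (H0 : forall t, inI lo hi t -> X 0 t = x t /\ Y 0 t = y t) by (intros; unfold X, Y; split; ring).
    assert (Hsupp : forall u t, inI lo hi t -> (t < c \/ d < t) -> X u t = x t /\ Y u t = y t).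
    { intros u t _ Ht. unfold X, Y. rewrite bump_zero by lra. split; ring. }
    pose proof (Hcrit X Y c d HX HY H0 Hc Hd (Rlt_le _ _ Hcd) Hsupp) as K1.
    pose proof (GFV_main lo hi x y X Y c d Hsx Hsy Hdet HX HY H0 Hc Hd (Rlt_le _ _ Hcd) Hsupp) as K2.
    assert (E : RInt (cint x y X Y) c d = 0).
    { rewrite <- (is_derive_unique _ _ _ K2). exact (is_derive_unique _ _ _ K1). }
    assert (Hex : ex_RInt (fun t => Ef x y t * Derive_n y 1 t * bump c d t) c d).
    { apply (@ex_RInt_continuous R_CompleteNormedModule). intros t Ht.
      rewrite Rmin_left, Rmax_right in Ht by lra.
      assert (Hi : inI lo hi t) by (apply (inI_between lo hi c d); auto).
      apply (continuous_mult (fun t => Ef x y t * Derive_n y 1 t) (bump c d) t); [|apply bump_cont].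
      apply (continuous_mult (Ef x y) (Derive_n y 1) t).
      apply (Ef_cont lo hi x y Hsx Hsy Hdet t Hi). apply cR_der with (Derive_n y 2 t). apply (dy lo hi y Hsy 1 t Hi). }
    destruct Hex as [I0 HI0].
    assert (HI1 : is_RInt (cint x y X Y) c d (scal (-(2/3)) I0)).
    { eapply is_RInt_ext; [| apply is_RInt_scal; exact HI0]. intros t _.
      unfold cint. rewrite (vj_lin x (bump c d)), (vj_lin y (fun _ => 0)). unfold scal; simpl; unfold mult; simpl. ring. }
    rewrite (is_RInt_unique _ _ _ _ HI1) in E. unfold scal in E; simpl in E; unfold mult in E; simpl in E.
    rewrite (is_RInt_unique _ _ _ _ HI0). lra.
Qed.

Lemma crit_x (Hcrit : ea_critical lo hi x y) t0 : inI lo hi t0 -> Ef x y t0 * Derive_n x 1 t0 = 0.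
Proof.
  intros Ht0. apply (fund lo hi (fun t => Ef x y t * Derive_n x 1 t)); auto.
  - intros t Ht. apply (continuous_mult (Ef x y) (Derive_n x 1) t).
    apply (Ef_cont lo hi x y Hsx Hsy Hdet t Ht). apply cR_der with (Derive_n x 2 t). apply (dx lo hi x Hsx 1 t Ht).
  - intros c d Hc Hd Hcd.
    set (X := fun u t => x t + u * (fun _ : R => 0) t). set (Y := fun u t => y t + u * bump c d t).
    assert (HX : Sm lo hi X) by (apply Sm_lin; [exact Hsx| apply smooth_zero]).
    assert (HY : Sm lo hi Y) by (apply Sm_lin; [exact Hsy| apply smooth_bump]).
    assert (H0 : forall t, inI lo hi t -> X 0 t = x t /\ Y 0 t = y t) by (intros; unfold X, Y; split; ring).
    assert (Hsupp : forall u t, inI lo hi t -> (t < c \/ d < t) -> X u t = x t /\ Y u t = y t).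
    { intros u t _ Ht. unfold X, Y. rewrite bump_zero by lra. split; ring. }
    pose proof (Hcrit X Y c d HX HY H0 Hc Hd (Rlt_le _ _ Hcd) Hsupp) as K1.
    pose proof (GFV_main lo hi x y X Y c d Hsx Hsy Hdet HX HY H0 Hc Hd (Rlt_le _ _ Hcd) Hsupp) as K2.
    assert (E : RInt (cint x y X Y) c d = 0).
    { rewrite <- (is_derive_unique _ _ _ K2). exact (is_derive_unique _ _ _ K1). }
    assert (Hex : ex_RInt (fun t => Ef x y t * Derive_n x 1 t * bump c d t) c d).
    { apply (@ex_RInt_continuous R_CompleteNormedModule). intros t Ht.
      rewrite Rmin_left, Rmax_right in Ht by lra.
      assert (Hi : inI lo hi t) by (apply (inI_between lo hi c d); auto).
      apply (continuous_mult (fun t => Ef x y t * Derive_n x 1 t) (bump c d) t); [|apply bump_cont].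
      apply (continuous_mult (Ef x y) (Derive_n x 1) t).
      apply (Ef_cont lo hi x y Hsx Hsy Hdet t Hi). apply cR_der with (Derive_n x 2 t). apply (dx lo hi x Hsx 1 t Hi). }
    destruct Hex as [I0 HI0].
    assert (HI1 : is_RInt (cint x y X Y) c d (scal (2/3) I0)).
    { eapply is_RInt_ext; [| apply is_RInt_scal; exact HI0]. intros t _.
      unfold cint. rewrite (vj_lin x (fun _ => 0)), (vj_lin y (bump c d)). unfold scal; simpl; unfold mult; simpl. ring. }
    rewrite (is_RInt_unique _ _ _ _ HI1) in E. unfold scal in E; simpl in E; unfold mult in E; simpl in E.
    rewrite (is_RInt_unique _ _ _ _ HI0). lra.
Qed.


Lemma Ef_zero (Hcrit : ea_critical lo hi x y) t : inI lo hi t -> Ef x y t = 0.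
Proof.
  intros Ht. pose proof (crit_x Hcrit t Ht) as A. pose proof (crit_y Hcrit t Ht) as B.
  pose proof (Hdet t Ht) as D. change (Derive_n x 1 t * Derive_n y 2 t - Derive_n y 1 t * Derive_n x 2 t = 1) in D.
  replace (Ef x y t) with (Ef x y t * (Derive_n x 1 t * Derive_n y 2 t - Derive_n y 1 t * Derive_n x 2 t)) by (rewrite D; ring).
  replace (Ef x y t * (Derive_n x 1 t * Derive_n y 2 t - Derive_n y 1 t * Derive_n x 2 t))
    with ((Ef x y t * Derive_n x 1 t) * Derive_n y 2 t - (Ef x y t * Derive_n y 1 t) * Derive_n x 2 t) by ring.
  rewrite A, B. ring.
Qed.

Definition Wx t := K0 x y t * Derive_n y 2 t - K1 x y t * Derive_n y 1 t.
Definition Wy t := K1 x y t * Derive_n x 1 t - K0 x y t * Derive_n x 2 t.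

Lemma Wx_der (Hcrit : ea_critical lo hi x y) t : inI lo hi t -> is_derive Wx t 0.
Proof.
  intros Ht.
  pose proof (der_det4 (K0 x y) (Derive_n y 2) (K1 x y) (Derive_n y 1) t _ _ _ _
    (K0_der lo hi x y Hsx Hsy t Ht) (dy lo hi y Hsy 2 t Ht) (K1_der lo hi x y Hsx Hsy t Ht) (dy lo hi y Hsy 1 t Ht)) as H.
  unfold Wx. eapply is_derive_ext; [intros; reflexivity|].
  replace 0 with (K1 x y t * Derive_n y 2 t + K0 x y t * Derive_n y 3 t -
     (K2 x y t * Derive_n y 1 t + K1 x y t * Derive_n y 2 t)); [exact H|].
  rewrite (y3_eq lo hi x y Hsx Hsy Hdet t Ht).
  pose proof (Ef_zero Hcrit t Ht) as E. rewrite (Ef_eq lo hi x y Hsx Hsy Hdet t Ht) in E.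
  replace (K2 x y t) with (- K0 x y t ^ 2) by lra. ring.
Qed.

Lemma Wy_der (Hcrit : ea_critical lo hi x y) t : inI lo hi t -> is_derive Wy t 0.
Proof.
  intros Ht.
  pose proof (der_det4 (K1 x y) (Derive_n x 1) (K0 x y) (Derive_n x 2) t _ _ _ _
    (K1_der lo hi x y Hsx Hsy t Ht) (dx lo hi x Hsx 1 t Ht) (K0_der lo hi x y Hsx Hsy t Ht) (dx lo hi x Hsx 2 t Ht)) as H.
  unfold Wy. eapply is_derive_ext; [intros; reflexivity|].
  replace 0 with (K2 x y t * Derive_n x 1 t + K1 x y t * Derive_n x 2 t -
     (K1 x y t * Derive_n x 2 t + K0 x y t * Derive_n x 3 t)); [exact H|].
  rewrite (x3_eq lo hi x y Hsx Hsy Hdet t Ht).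
  pose proof (Ef_zero Hcrit t Ht) as E. rewrite (Ef_eq lo hi x y Hsx Hsy Hdet t Ht) in E.
  replace (K2 x y t) with (- K0 x y t ^ 2) by lra. ring.
Qed.

Lemma const_I (f : R -> R) : (forall t, inI lo hi t -> is_derive f t 0) ->
  forall t t0, inI lo hi t -> inI lo hi t0 -> f t = f t0.
Proof.
  intros Hd t t0 Ht Ht0.
  destruct (total_order_T t t0) as [[H|H]|H].
  - apply (eq_is_derive f t t0); [|exact H]. intros s Hs. apply Hd. apply (inI_between lo hi t t0); auto.
  - subst; reflexivity.
  - symmetry. apply (eq_is_derive f t0 t); [|exact H]. intros s Hs. apply Hd. apply (inI_between lo hi t0 t); auto.
Qed.

Lemma only_if_dir : ea_critical lo hi x y ->
  exists A B : R, forall t, inI lo hi t -> ea_curv x y t = A * Derive x t + B * Derive y t.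
Proof.
  intros Hcrit.
  destruct (classic (exists t0, inI lo hi t0)) as [[t0 Ht0]|Hn].
  - exists (Wx t0), (Wy t0). intros t Ht.
    rewrite <- (const_I Wx (Wx_der Hcrit) t t0 Ht Ht0), <- (const_I Wy (Wy_der Hcrit) t t0 Ht Ht0).
    rewrite (curv_K0 lo hi x y Hsx Hsy Hdet t Ht).
    pose proof (Hdet t Ht) as D. change (Derive_n x 1 t * Derive_n y 2 t - Derive_n y 1 t * Derive_n x 2 t = 1) in D.
    change (Derive x t) with (Derive_n x 1 t). change (Derive y t) with (Derive_n y 1 t).
    unfold Wx, Wy.
    replace (K0 x y t) with (K0 x y t * (Derive_n x 1 t * Derive_n y 2 t - Derive_n y 1 t * Derive_n x 2 t)) at 1 by (rewrite D; ring).
    ring.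
  - exists 0, 0. intros t Ht. exfalso. apply Hn. exists t; exact Ht.
Qed.

End Final.


Theorem theorem2 (lo hi : Rbar) (x y : R -> R) :
  Rbar_lt lo hi ->
  smooth_on lo hi x -> smooth_on lo hi y ->
  (forall t, inI lo hi t -> ea_det x y t = 1) ->
  (ea_critical lo hi x y <->
   exists A B : R, forall t, inI lo hi t ->
     ea_curv x y t = A * Derive x t + B * Derive y t).
Proof.
  intros _ Hsx Hsy Hdet. split.
  - apply only_if_dir; auto.
  - intros [A [B H]]. apply (if_dir lo hi x y Hsx Hsy Hdet A B H).
Qed.
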